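(* Let $M\ge1$. (a) Every irreducible interval other than $[q_G,q_T]$ lies in $I_0=(q_T,M+1]$. (b) For each $n\in\mathbb N$, every $n$-irreducible interval, except the one with right endpoint $q_{n+1}'$, lies in $I_n=(q_{n+1}',q_n']$.
   Context: Order and word operations. Sequences in $\Omega_M=\{0,\dots,M\}^{\mathbb N}$ are ordered lexicographically; words are compared via $\mathbf c\prec\mathbf d$ iff $\mathbf c0^\infty\prec\mathbf d0^\infty$. For a word $c_1\dots c_k$: - $c_1\dots c_k^\pm=c_1\dots c_{k-1}(c_k\pm1)$; - $\overline{c_1\dots c_k}=(M-c_1)\dots(M-c_k)$. Quasi-greedy expansion. For $q\in(1,M+1]$, $\alpha(q)$ is the lexicographically largest $(a_i)\in\Omega_M$ not ending in $0^\infty$ with $\sum a_iq^{-i}=1$. Fundamental words and intervals. A word $a_1\dots a_m$ ($m\ge2$) is fundamental if $\overline{a_1\dots a_{m-i}}\preceq a_{i+1}\dots a_m\prec a_1\dots a_{m-i}$ for $1\le i<m$. When $M\ge2$, a letter $a_1$ is fundamental if $M-a_1\le a_1<M$. $\mathcal A_M$ is the set of fundamental words, and $\mathcal A_1$ is the case $M=1$. For $\mathbf a\in\mathcal A_M$, $J_{\mathbf a}=[q_L(\mathbf a),q_R(\mathbf a)]$ with $\alpha(q_L(\mathbf a))=\mathbf a^\infty$ and $\alpha(q_R(\mathbf a))=\mathbf a^+(\overline{\mathbf a})^\infty$. The graph. Let $G$ have vertices Start, $A$, $B$ and edges - $e_0$: Start$\to A$, - $e_1$: $A\to B$, - $e_2$: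 $B\to B$, - $e_3$: $B\to A$, - $e_4$: $A\to A$. It carries two labelings: - $\mathcal L_{\mathbf a}$: $e_0,e_3\mapsto\mathbf a^+$; $e_1\mapsto\overline{\mathbf a^+}$; $e_2\mapsto\mathbf a$; $e_4\mapsto\overline{\mathbf a}$; - $\mathcal L^*$: $e_0,e_3,e_4\mapsto1$; $e_1,e_2\mapsto0$. Composition. $\Phi_{\mathbf a}$ maps $\mathcal L_{\mathbf a}(e_{i_1})\cdots\mathcal L_{\mathbf a}(e_{i_k})$ (a path with $i_1=0$) to $\mathcal L^*(e_{i_1}\dots e_{i_k})$. For $\mathbf b\in\mathcal A_1$, $\mathbf a\circ\mathbf b:=\Phi_{\mathbf a}^{-1}(\mathbf b)$. $(10)^{\circ k}$ is the $k$-fold composition of $10$ with itself; $(10)^{\circ 0}$ is omitted. Irreducibility. - $\mathbf a\in\mathcal A_M$ is irreducible if there are no $\mathbf c\in\mathcal A_M$, $\mathbf d\in\mathcal A_1$ with $\mathbf a=\mathbf c\circ\mathbf d$. - The unit lift is $\mathbf u=k$ if $M=2k$, and $\mathbf u=(k+1)k$ if $M=2k+1$. - $\mathbf a$ is $n$-irreducible if $\mathbf a=\mathbf u\circ(10)^{\circ(n-1)}\circ\mathbf b$ for some irreducible $\mathbf b\in\mathcal A_1$. - $J_{\mathbf a}$ is an irreducible (resp. $n$-irreducible) interval if $\mathbf a$ is irreducible (resp. $n$-irreducible). Special bases. - $q_G=q_L(\mathbf u)$. - Let $\tau_i$ be the parity of the binary digit sum of $i\ge0$. Put $\lambda_i=k+\tau_i-\tau_{i-1}$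 if $M=2k$, and $\lambda_i=k+\tau_i$ if $M=2k+1$. - For $n\ge1$, $\alpha(q_n')=\lambda_1\dots\lambda_N(\overline{\lambda_1\dots\lambda_N}^+)^\infty$, with $N=2^{n-1}$ for even $M$ and $N=2^n$ for odd $M$. - $q_T=q_1'$, $q_0'=M+1$, and $I_n=(q_{n+1}',q_n']$. *)

(* Defs.v *)
(* concrete reals R, words as lists of nat, sequences as nat -> nat
   (0-indexed: position i corresponds to the paper's index i+1). *)
From Stdlib Require Import Reals List Arith PArith NArith.
Import ListNotations.
Open Scope R_scope.

Definition seqn := nat -> nat.

Definition seq_lt (a b : seqn) : Prop :=
  exists n, (forall i, (i < n)%nat -> a i = b i) /\ (a n < b n)%nat.

Definition pad (w : list nat) : seqn := fun i => nth i w 0%nat.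

Definition word_lt (c d : list nat) : Prop := seq_lt (pad c) (pad d).
Definition word_le (c d : list nat) : Prop :=
  word_lt c d \/ (forall i, pad c i = pad d i).

Definition wplus (w : list nat) : list nat :=
  match rev w with [] => [] | x :: r => rev r ++ [S x] end.
Definition wminus (w : list nat) : list nat :=
  match rev w with [] => [] | x :: r => rev r ++ [pred x] end.
Definition wbar (M : nat) (w : list nat) : list nat := map (fun c => M - c)%nat w.

(* periodic sequence w^oo (w nonempty) *)
Definition per (w : list nat) : seqn :=
  fun i => nth (i mod length w) w 0%nat.
Definition pre_per (c d : list nat) : seqn :=
  fun i => if (i <? length c)%nat then nth i c 0%nat
           else nth ((i - length c) mod length d) d 0%nat.

Definition in_Omega (M : nat) (a : seqn) : Prop := forall i, (a i <= M)%nat.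
Definition not_end_zero (a : seqn) : Prop := forall n, exists i, (n <= i)%nat /\ a i <> 0%nat.
Definition is_expansion (q : R) (a : seqn) : Prop :=
  infinite_sum (fun i => INR (a i) / q ^ (S i)) 1.

(* is_alpha M q a  <->  q in (1, M+1] and alpha(q) = a *)
Definition is_alpha (M : nat) (q : R) (a : seqn) : Prop :=
  1 < q <= INR M + 1 /\
  in_Omega M a /\ not_end_zero a /\ is_expansion q a /\
  (forall b, in_Omega M b -> not_end_zero b -> is_expansion q b -> ~ seq_lt a b).

Definition fundamental (M : nat) (a : list nat) : Prop :=
  Forall (fun c => (c <= M)%nat) a /\
  ( (2 <= length a /\
     forall i, (1 <= i < length a)%nat ->
       word_le (wbar M (firstn (length a - i) a)) (skipn i a) /\
       word_lt (skipn i a) (firstn (length a - i) a))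
  \/ (2 <= M /\ exists a1, a = [a1] /\ (M - a1 <= a1 < M)%nat) )%nat.

(* J_a = [x, y]  with  alpha(x) = a^oo  and  alpha(y) = a^+ (abar)^oo *)
Definition is_qL (M : nat) (a : list nat) (x : R) : Prop := is_alpha M x (per a).
Definition is_qR (M : nat) (a : list nat) (y : R) : Prop :=
  is_alpha M y (pre_per (wplus a) (wbar M a)).

Inductive gstate := GStart | GA | GB.

(* Reading b as an L*-labelled path from Start (deterministic), emit the
   L_a-labels of the edges: this is Phi_a^{-1}(b). *)
Fixpoint comp_aux (M : nat) (a : list nat) (s : gstate) (b : list nat)
  : option (list nat) :=
  match b with
  | [] => Some []
  | x :: b' =>
    let step := match s, x with
      | GStart, 1%nat => Some (wplus a, GA)
      | GA, 0%nat => Some (wbar M (wplus a), GB)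
      | GB, 0%nat => Some (a, GB)
      | GB, 1%nat => Some (wplus a, GA)
      | GA, 1%nat => Some (wbar M a, GA)
      | _, _ => None
      end in
    match step with
    | None => None
    | Some (w, s') =>
        match comp_aux M a s' b' with
        | None => None
        | Some r => Some (w ++ r)
        end
    end
  end.

Definition compose (M : nat) (a b : list nat) : option (list nat) :=
  comp_aux M a GStart b.

Definition irreducible (M : nat) (a : list nat) : Prop :=
  ~ exists c d, fundamental M c /\ fundamental 1 d /\ compose M c d = Some a.

Fixpoint comp10_iter (k : nat) (b : list nat) : option (list nat) :=
  match k with
  | 0%nat => Some b
  | S k' => match comp10_iter k' b with
            | None => None
            | Some w => compose 1 [1; 0]%nat w
            end
  end.

Definition unit_lift (M : nat) : list nat :=
  if Nat.even M then [M / 2]%nat else [S (M / 2); M / 2]%nat.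

Definition n_irreducible (M n : nat) (a : list nat) : Prop :=
  exists b w, fundamental 1 b /\ irreducible 1 b /\
    comp10_iter (n - 1) b = Some w /\ compose M (unit_lift M) w = Some a.

Fixpoint popcount (p : positive) : nat :=
  match p with xH => 1 | xO p' => popcount p' | xI p' => S (popcount p') end%nat.
Definition bitsum (i : nat) : nat :=
  match N.of_nat i with N0 => 0%nat | Npos p => popcount p end.
Definition tau (i : nat) : nat := if Nat.odd (bitsum i) then 1%nat else 0%nat.

(* lambda_i for i >= 1 *)
Definition lam (M i : nat) : nat :=
  if Nat.even M then (M / 2 + tau i - tau (i - 1))%nat
  else (M / 2 + tau i)%nat.

Definition lamN (M n : nat) : nat :=
  if Nat.even M then (2 ^ (n - 1))%nat else (2 ^ n)%nat.

Definition lam_word (M n : nat) : list nat :=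
  map (fun j => lam M (S j)) (seq 0 (lamN M n)).

Definition is_qprime (M n : nat) (q : R) : Prop :=
  is_alpha M q (pre_per (lam_word M n) (wplus (wbar M (lam_word M n)))).

(* Main.v *)
Require Import Defs.
From Stdlib Require Import Reals Lra Lia List Arith Classical NArith PArith.
Import ListNotations.

Section Part_R1.
Local Open Scope R_scope.


Lemma sum_S f n : sum_f_R0 f (S n) = sum_f_R0 f n + f (S n).
Proof. reflexivity. Qed.

Lemma sum_mono f n m : (forall i, 0 <= f i) -> (n <= m)%nat -> sum_f_R0 f n <= sum_f_R0 f m.
Proof.
  intros Hf H. induction H. lra. rewrite sum_S. specialize (Hf (S m)). lra.
Qed.

Lemma sum_ge_term f n j : (forall i, 0 <= f i) -> (n < j)%nat ->
  sum_f_R0 f n + f j <= sum_f_R0 f j.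
Proof.
  intros Hf H. induction H. rewrite sum_S. lra.
  rewrite sum_S. pose proof (sum_mono f n m Hf ltac:(lia)).
  specialize (Hf (S m)). lra.
Qed.

Lemma sum_nonneg f n : (forall i, 0 <= f i) -> 0 <= sum_f_R0 f n.
Proof. intros Hf. induction n. simpl. apply Hf. rewrite sum_S. specialize (Hf (S n)). lra. Qed.

Lemma sum_ge_term0 f j : (forall i, 0 <= f i) -> f j <= sum_f_R0 f j.
Proof. intros Hf. destruct j. simpl; lra. pose proof (sum_ge_term f j (S j) Hf ltac:(lia)).
  pose proof (sum_nonneg f j Hf). lra. Qed.

Lemma partial_le_lim f l N : (forall i, 0 <= f i) -> infinite_sum f l -> sum_f_R0 f N <= l.
Proof.
  intros Hf Hl. destruct (Rle_dec (sum_f_R0 f N) l) as [h|h]; auto. exfalso.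
  destruct (Hl (sum_f_R0 f N - l)) as [N0 HN0]. lra.
  specialize (HN0 (max N N0) ltac:(lia)). unfold R_dist in HN0.
  pose proof (sum_mono f N (max N N0) Hf ltac:(lia)).
  apply Rabs_def2 in HN0. lra.
Qed.

Lemma lim_le f l n0 c : infinite_sum f l -> (forall N, (n0 <= N)%nat -> sum_f_R0 f N <= c) -> l <= c.
Proof.
  intros Hl H. destruct (Rle_dec l c) as [h|h]; auto. exfalso.
  destruct (Hl (l - c)) as [N0 HN0]. lra.
  specialize (HN0 (max n0 N0) ltac:(lia)). unfold R_dist in HN0.
  specialize (H (max n0 N0) ltac:(lia)).
  apply Rabs_def2 in HN0. lra.
Qed.

Lemma pow_pos' q n : 0 < q -> 0 < q ^ n.
Proof. intros; apply pow_lt; auto. Qed.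

Fixpoint lg (d : nat) (x : R) : nat :=
  match d with 0 => 0%nat | S d' => if Rlt_dec (INR (S d')) x then S d' else lg d' x end.

Lemma lg_le d x : (lg d x <= d)%nat.
Proof. induction d; simpl. lia. destruct Rlt_dec; lia. Qed.

Lemma lg_lt d x : lg d x = 0%nat \/ INR (lg d x) < x.
Proof. induction d; simpl. auto. destruct Rlt_dec; auto. Qed.

Lemma lg_up d x : (lg d x < d)%nat -> x <= INR (S (lg d x)).
Proof.
  induction d; simpl. lia. destruct Rlt_dec. lia.
  intros _. destruct (Nat.eq_dec (lg d x) d) as [e|e]. rewrite e. lra.
  apply IHd. pose proof (lg_le d x). lia.
Qed.

Section Greedy.
Variables (M : nat) (q : R) (pre : nat -> nat) (n : nat).

Fixpoint rem (i : nat) : R :=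
  match i with 0 => 1 | S i' => q * rem i' - INR (if (i' <=? n)%nat then pre i' else lg M (q * rem i')) end.
Definition dig (i : nat) : nat := if (i <=? n)%nat then pre i else lg M (q * rem i).

Lemma rem_S i : rem (S i) = q * rem i - INR (dig i).
Proof. reflexivity. Qed.

Hypothesis Hq : 1 < q.

Lemma dig_sum N : sum_f_R0 (fun i => INR (dig i) / q ^ S i) N = 1 - rem (S N) / q ^ S N.
Proof.
  assert (q <> 0) by lra.
  induction N.
  - simpl sum_f_R0. rewrite (rem_S 0). change (rem 0) with 1. field. auto.
  - rewrite sum_S, IHN. rewrite (rem_S (S N)). 
    assert (q ^ S N <> 0) by (apply pow_nonzero; auto).
    change (q ^ S (S N)) with (q * q ^ S N). field. auto.
Qed.

Hypothesis HqM : q <= INR M + 1.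
Let B := INR M / (q - 1).

Lemma B_ge1 : 1 <= B.
Proof. unfold B. apply (Rmult_le_reg_r (q-1)). lra. field_simplify; lra. Qed.

Lemma rem_bound i : (n < i)%nat -> 0 < rem i <= B -> 0 < rem (S i) <= B.
Proof.
  intros Hi [H1 H2]. rewrite rem_S. unfold dig.
  destruct (Nat.leb_spec i n). lia.
  set (x := q * rem i). assert (0 < x) by (unfold x; nra).
  pose proof B_ge1.
  destruct (lg_lt M x) as [e|e].
  - rewrite e. simpl. split. lra.
    assert (HM : (0 < M)%nat). { destruct M. simpl in HqM. lra. lia. }
    pose proof (lg_up M x ltac:(lia)). rewrite e in H4. simpl in H4. lra.
  - split. lra.
    destruct (Nat.eq_dec (lg M x) M) as [e2|e2].
    + rewrite e2. unfold x. 
      assert (q * B - INR M = B). { unfold B. field. lra. }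
      nra.
    + pose proof (lg_le M x). pose proof (lg_up M x ltac:(lia)). rewrite S_INR in H5. lra.
Qed.

Lemma rem_bound_all : 0 < rem (S n) <= B -> forall j, 0 < rem (S n + j) <= B.
Proof.
  intros H j. induction j. rewrite Nat.add_0_r; auto.
  rewrite Nat.add_succ_r. apply rem_bound; auto. lia.
Qed.

Lemma dig_expansion : 0 < rem (S n) <= B -> is_expansion q dig.
Proof.
  intros Hb. unfold is_expansion, infinite_sum. intros eps Heps.
  assert (HB : 0 < B) by (pose proof B_ge1; lra).
  destruct (pow_lt_1_zero (/ q)) with (y := eps / B) as [N0 HN0].
  { rewrite Rabs_pos_eq. rewrite <- Rinv_1. apply Rinv_1_lt_contravar; lra. left; apply Rinv_0_lt_compat; lra. }
  { apply Rdiv_lt_0_compat; lra. }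
  exists (max N0 n). intros m Hm. unfold R_dist. rewrite dig_sum.
  replace (1 - rem (S m) / q ^ S m - 1) with (- (rem (S m) / q ^ S m)) by ring.
  rewrite Rabs_Ropp.
  assert (Hr : 0 < rem (S m) <= B). { replace (S m) with (S n + (m - n))%nat by lia. apply rem_bound_all; auto. }
  specialize (HN0 (S m) ltac:(lia)). rewrite pow_inv in HN0.
  assert (0 < q ^ S m) by (apply pow_lt; lra).
  rewrite Rabs_pos_eq in HN0 by (left; apply Rinv_0_lt_compat; auto).
  rewrite Rabs_pos_eq by (left; apply Rdiv_lt_0_compat; lra).
  unfold Rdiv. apply Rle_lt_trans with (B * / q ^ S m).
  apply Rmult_le_compat_r. left; apply Rinv_0_lt_compat; auto. lra.
  apply (Rmult_lt_compat_l B) in HN0; auto. replace (B * (eps / B)) with eps in HN0 by (field; lra). lra.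
Qed.

Lemma dig_nez : 0 < rem (S n) <= B -> not_end_zero dig.
Proof.
  intros Hb N. apply NNPP. intro Hc.
  assert (Hz : forall i, (N <= i)%nat -> dig i = 0%nat).
  { intros i Hi. apply NNPP. intro. apply Hc. exists i; auto. }
  set (N' := (S n + N)%nat).
  assert (Hg : forall j, rem (N' + j) = q ^ j * rem N').
  { induction j. rewrite Nat.add_0_r. simpl; ring.
    rewrite Nat.add_succ_r, rem_S, Hz by (unfold N'; lia). rewrite IHj. simpl. ring. }
  assert (H0 : 0 < rem N' <= B) by (apply rem_bound_all; auto).
  destruct (Pow_x_infinity q) with (b := B / rem N' + 1) as [J HJ].
  { rewrite Rabs_pos_eq; lra. }
  specialize (HJ J (le_n _)). rewrite Rabs_pos_eq in HJ by (apply pow_le; lra).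
  assert (HH : 0 < rem (N' + J) <= B) by (unfold N'; rewrite <- Nat.add_assoc; apply rem_bound_all; auto).
  rewrite Hg in HH.
  assert (q ^ J * rem N' >= (B / rem N' + 1) * rem N') by (apply Rmult_ge_compat_r; lra).
  replace ((B / rem N' + 1) * rem N') with (B + rem N') in H by (field; lra). lra.
Qed.

End Greedy.

End Part_R1.
Close Scope R_scope.

Section Part_R2.
Local Open Scope R_scope.


Lemma Rdiv_le_0_compat a b : 0 <= a -> 0 < b -> 0 <= a / b.
Proof. intros. unfold Rdiv. apply Rmult_le_pos; auto. left; apply Rinv_0_lt_compat; auto. Qed.

Lemma pow_lt_S x y n : 0 < x -> x < y -> x ^ S n < y ^ S n.
Proof. intros. simpl. assert (x ^ n <= y ^ n) by (apply pow_incr; lra).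
  assert (0 < x ^ n) by (apply pow_lt; lra). nra. Qed.

Lemma tail_bound (M : nat) (q : R) (s : seqn) n : 1 < q -> in_Omega M s ->
  forall j, sum_f_R0 (fun i => INR (s i) / q ^ S i) (n + j) + INR M / (q ^ S (n + j) * (q - 1))
   <= sum_f_R0 (fun i => INR (s i) / q ^ S i) n + INR M / (q ^ S n * (q - 1)).
Proof.
  intros Hq Hs j. induction j. rewrite Nat.add_0_r; lra.
  rewrite Nat.add_succ_r, sum_S.
  assert (0 < q ^ S (n + j)) by (apply pow_lt; lra).
  assert (INR (s (S (n + j))) <= INR M) by (apply le_INR, Hs).
  change (q ^ S (S (n + j))) with (q * q ^ S (n + j)).
  assert (E : INR M / (q * q ^ S (n + j) * (q - 1)) + INR M / (q * q ^ S (n + j))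
            = INR M / (q ^ S (n + j) * (q - 1))) by (field; split; lra).
  assert (INR (s (S (n + j))) / (q * q ^ S (n + j)) <= INR M / (q * q ^ S (n + j))).
  { unfold Rdiv. apply Rmult_le_compat_r; auto. left. apply Rinv_0_lt_compat. nra. }
  lra.
Qed.

Lemma alpha_lt (M : nat) q1 q2 s s' : is_alpha M q1 s -> is_alpha M q2 s' -> seq_lt s s' -> q1 < q2.
Proof.
  intros [Hq1 [Ho1 [Hn1 [He1 Hmax1]]]] [Hq2 [Ho2 [Hn2 [He2 Hmax2]]]] [n [Heq Hlt]].
  destruct (Rlt_or_le q1 q2) as [h|h]; auto. exfalso.
  set (q := q1) in *.
  set (f := fun i => INR (s i) / q ^ S i).
  set (g := fun i => INR (s' i) / q ^ S i).
  set (g2 := fun i => INR (s' i) / q2 ^ S i).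
  assert (Hf0 : forall i, 0 <= f i) by (intro i; unfold f; apply Rdiv_le_0_compat; [apply pos_INR| apply pow_lt; lra]).
  assert (Hg20 : forall i, 0 <= g2 i) by (intro i; unfold g2; apply Rdiv_le_0_compat; [apply pos_INR| apply pow_lt; lra]).
  set (P := sum_f_R0 g n).
  assert (HgP : forall i, g i <= g2 i).
  { intro i. unfold g, g2. unfold Rdiv. apply Rmult_le_compat_l. apply pos_INR.
    apply Rinv_le_contravar. apply pow_lt; lra. apply pow_incr; lra. }
  assert (HP1 : P < 1).
  { destruct (Hn2 (S n)) as [j [Hj Hj0]].
    assert (sum_f_R0 g n <= sum_f_R0 g2 n).
    { apply sum_Rle. intros; apply HgP. }
    pose proof (sum_ge_term g2 n j Hg20 ltac:(lia)).
    pose proof (partial_le_lim g2 1 j Hg20 He2).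
    assert (0 < g2 j). { unfold g2. apply Rdiv_lt_0_compat. apply lt_0_INR; lia. apply pow_lt; lra. }
    unfold P. lra. }
  assert (HqS : 0 < q ^ S n) by (apply pow_lt; lra).
  assert (HPB : 1 - P <= INR M / (q - 1) / q ^ S n).
  { assert (H1 : 1 <= sum_f_R0 f n + INR M / (q ^ S n * (q - 1))).
    { apply (lim_le f 1 n). exact He1. intros N HN.
      pose proof (tail_bound M q s n ltac:(lra) Ho1 (N - n)). replace (n + (N - n))%nat with N in H by lia. fold f in H.
      assert (0 <= INR M / (q ^ S N * (q - 1))).
      { apply Rdiv_le_0_compat. apply pos_INR. apply Rmult_lt_0_compat. apply pow_lt; lra. lra. }
      lra. }
    assert (H2 : sum_f_R0 f n + 1 / q ^ S n <= P).
    { unfold P. destruct n.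
      - simpl. unfold f, g. simpl in *. rewrite <- Rdiv_plus_distr.
        unfold Rdiv; apply Rmult_le_compat_r. left; apply Rinv_0_lt_compat; lra.
        rewrite <- S_INR. apply le_INR. lia.
      - rewrite !sum_S. rewrite (sum_eq f g n).
        assert (f (S n) + 1 / q ^ S (S n) <= g (S n)).
        { unfold f, g. rewrite <- Rdiv_plus_distr.
          unfold Rdiv; apply Rmult_le_compat_r. left; apply Rinv_0_lt_compat; apply pow_lt; lra.
          rewrite <- S_INR. apply le_INR. lia. }
        lra. intros i Hi. unfold f, g. rewrite Heq by lia. auto. }
    replace (INR M / (q - 1) / q ^ S n) with (INR M / (q ^ S n * (q - 1))) by (field; lra).
    assert (0 < 1 / q ^ S n) by (apply Rdiv_lt_0_compat; lra). lra. }
  (* build the greedy expansion *)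
  assert (Hrem : rem M q s' n (S n) = q ^ S n * (1 - P)).
  { pose proof (dig_sum M q s' n ltac:(lra) n).
    assert (sum_f_R0 (fun i => INR (dig M q s' n i) / q ^ S i) n = P).
    { unfold P. apply sum_eq. intros i Hi. unfold dig, g. destruct (Nat.leb_spec i n); auto. lia. }
    rewrite H0 in H. apply (Rmult_eq_compat_l (q ^ S n)) in H.
    replace (q ^ S n * (1 - rem M q s' n (S n) / q ^ S n)) with (q ^ S n - rem M q s' n (S n)) in H by (field; lra).
    lra. }
  assert (Hb : 0 < rem M q s' n (S n) <= INR M / (q - 1)).
  { rewrite Hrem. split. apply Rmult_lt_0_compat; lra.
    apply (Rmult_le_compat_l (q ^ S n)) in HPB; [|lra].
    replace (q ^ S n * (INR M / (q - 1) / q ^ S n)) with (INR M / (q-1)) in HPB by (field; lra). lra. }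
  apply (Hmax1 (dig M q s' n)).
  - intro i. unfold dig. destruct (Nat.leb_spec i n). apply Ho2. apply lg_le.
  - apply dig_nez; auto; lra.
  - apply dig_expansion; auto; lra.
  - exists n. split.
    + intros i Hi. unfold dig. destruct (Nat.leb_spec i n); [|lia]. apply Heq; auto.
    + unfold dig. destruct (Nat.leb_spec n n); [|lia]. auto.
Qed.

Lemma alpha_eq (M : nat) q1 q2 s s' : is_alpha M q1 s -> is_alpha M q2 s' -> (forall i, s i = s' i) -> q1 = q2.
Proof.
  intros A1 A2 Heq.
  assert (forall q1 q2 s s', is_alpha M q1 s -> is_alpha M q2 s' -> (forall i, s i = s' i) -> ~ q1 < q2).
  { clear. intros q1 q2 s s' [Hq1 [Ho1 [Hn1 [He1 _]]]] [Hq2 [Ho2 [Hn2 [He2 _]]]] Heq Hlt.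
    set (f1 := fun i => INR (s i) / q1 ^ S i).
    set (f2 := fun i => INR (s i) / q2 ^ S i).
    assert (He2' : infinite_sum f2 1).
    { unfold infinite_sum in *. intros eps Heps. destruct (He2 eps Heps) as [N HN]. exists N. intros n Hn.
      rewrite (sum_eq _ (fun i => INR (s' i) / q2 ^ S i)). auto. intros. unfold f2. rewrite Heq. auto. }
    assert (Hd : infinite_sum (fun i => f1 i - f2 i) (1 - 1)).
    { unfold infinite_sum. intros eps Heps. destruct (CV_minus _ _ 1 1 He1 He2' eps Heps) as [N HN].
      exists N. intros n Hn. rewrite minus_sum. apply HN; auto. }
    assert (Hnn : forall i, 0 <= f1 i - f2 i).
    { intro i. unfold f1, f2. unfold Rdiv. assert (0 <= INR (s i)) by apply pos_INR.
      assert (/ q2 ^ S i <= / q1 ^ S i). { apply Rinv_le_contravar. apply pow_lt; lra. apply pow_incr; lra. }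
      nra. }
    destruct (Hn1 0%nat) as [j [_ Hj]].
    pose proof (partial_le_lim _ _ j Hnn Hd).
    pose proof (sum_ge_term0 _ j Hnn).
    assert (0 < f1 j - f2 j).
    { unfold f1, f2. unfold Rdiv. assert (0 < INR (s j)) by (apply lt_0_INR; lia).
      assert (/ q2 ^ S j < / q1 ^ S j). { apply Rinv_lt_contravar. apply Rmult_lt_0_compat; apply pow_lt; lra.
        apply pow_lt_S; lra. }
      nra. }
    lra. }
  destruct (Rtotal_order q1 q2) as [h|[h|h]]; auto.
  - exfalso. apply (H q1 q2 s s' A1 A2 Heq h).
  - exfalso. apply (H q2 q1 s' s A2 A1 (fun i => eq_sym (Heq i)) h).
Qed.

End Part_R2.
Close Scope R_scope.

Definition seq_eq (s t : seqn) := forall i, s i = t i.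
Definition seq_le (s t : seqn) := seq_lt s t \/ seq_eq s t.
Definition shift (k : nat) (s : seqn) : seqn := fun i => s (k + i).
Definition agree (s t : seqn) (n : nat) := forall i, i < n -> s i = t i.
Definition wlt (s t : seqn) (n : nat) := exists k, k < n /\ agree s t k /\ s k < t k.
Definition wle (s t : seqn) (n : nat) := wlt s t n \/ agree s t n.
Definition sbar (M : nat) (s : seqn) : seqn := fun i => M - s i.

Lemma least_ex (P : nat -> Prop) : (exists i, P i) -> exists i, P i /\ forall j, j < i -> ~ P j.
Proof.
  intros [i Hi]. induction i as [i IH] using (well_founded_induction lt_wf).
  destruct (classic (exists j, j < i /\ P j)) as [[j [Hj Pj]]|H].
  - apply (IH j Hj Pj).
  - exists i. split; auto. intros j Hj Pj. apply H. eauto.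
Qed.

Lemma agree_mono s t n m : agree s t n -> m <= n -> agree s t m.
Proof. intros H Hm i Hi. apply H. lia. Qed.

Lemma agree_sym s t n : agree s t n -> agree t s n.
Proof. intros H i Hi. symmetry. auto. Qed.

Lemma agree_trans s t u n : agree s t n -> agree t u n -> agree s u n.
Proof. intros H1 H2 i Hi. rewrite H1, H2; auto. Qed.

Lemma wtrich s t n : wlt s t n \/ agree s t n \/ wlt t s n.
Proof.
  destruct (classic (exists i, i < n /\ s i <> t i)) as [H|H].
  - destruct (least_ex _ H) as [k [[Hk Hne] Hmin]].
    assert (Ha : agree s t k).
    { intros i Hi. apply NNPP. intro. apply (Hmin i Hi). split; auto. lia. }
    destruct (Nat.lt_trichotomy (s k) (t k)) as [h|[h|h]]; try lia.
    + left. exists k. auto.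
    + right; right. exists k. split; auto. split; auto. apply agree_sym; auto.
  - right; left. intros i Hi. apply NNPP. intro. apply H. eauto.
Qed.

Lemma wlt_asym s t n : wlt s t n -> wle t s n -> False.
Proof.
  intros [k [Hk [Ha Hl]]] [[k' [Hk' [Ha' Hl']]]|Ha'].
  - destruct (Nat.lt_trichotomy k k') as [h|[h|h]].
    + rewrite Ha' in Hl by auto. lia.
    + subst. lia.
    + rewrite Ha in Hl' by auto. lia.
  - rewrite Ha' in Hl by auto. lia.
Qed.

Lemma wlt_irrefl s n : wlt s s n -> False.
Proof. intros [k [_ [_ H]]]. lia. Qed.

Lemma wle_refl s n : wle s s n.
Proof. right. intros i _. auto. Qed.

Lemma wle_trans s t u n : wle s t n -> wle t u n -> wle s u n.
Proof.
  intros [[k [Hk [Ha Hl]]]|Ha] [[k' [Hk' [Ha' Hl']]]|Ha'].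
  - left. destruct (Nat.lt_trichotomy k k') as [h|[h|h]].
    + exists k. split; auto. split. intros i Hi. rewrite Ha, Ha'; auto; lia. rewrite <- Ha' by auto. auto.
    + subst. exists k'. split; auto. split. intros i Hi. rewrite Ha, Ha'; auto. lia.
    + exists k'. split; auto. split. intros i Hi. rewrite Ha, Ha'; auto; lia. rewrite Ha by auto. auto.
  - left. exists k. split; auto. split. intros i Hi. rewrite Ha, Ha'; auto; lia. rewrite <- Ha' by lia. auto.
  - left. exists k'. split; auto. split. intros i Hi. rewrite Ha, Ha'; auto; lia. rewrite Ha by lia. auto.
  - right. eapply agree_trans; eauto.
Qed.

Lemma wlt_wle s t n : wlt s t n -> wle s t n.
Proof. left; auto. Qed.

Lemma wlt_wle_trans s t u n : wlt s t n -> wle t u n -> wlt s u n.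
Proof.
  intros H1 H2. destruct (wtrich s u n) as [h|[h|h]]; auto.
  - exfalso. apply (wlt_asym s t n H1). eapply wle_trans. exact H2. right. apply agree_sym; auto.
  - exfalso. apply (wlt_asym s t n H1). eapply wle_trans. exact H2. left; auto.
Qed.

Lemma wle_wlt_trans s t u n : wle s t n -> wlt t u n -> wlt s u n.
Proof.
  intros H1 H2. destruct (wtrich s u n) as [h|[h|h]]; auto.
  - exfalso. apply (wlt_asym t u n H2). eapply wle_trans. right. apply agree_sym; exact h. auto.
  - exfalso. apply (wlt_asym t u n H2). eapply wle_trans. left; exact h. auto.
Qed.

Lemma wle_mono s t n m : wle s t n -> m <= n -> wle s t m.
Proof.
  intros [[k [Hk [Ha Hl]]]|Ha] Hm.
  - destruct (Nat.lt_ge_cases k m). left. exists k; auto. right. eapply agree_mono; eauto.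
  - right. eapply agree_mono; eauto.
Qed.

Lemma wlt_mono s t n m : wlt s t n -> n <= m -> wlt s t m.
Proof. intros [k [Hk H]] Hm. exists k. split; auto. lia. Qed.

Lemma wle_ext s t s' t' n : agree s s' n -> agree t t' n -> wle s t n -> wle s' t' n.
Proof.
  intros H1 H2 [[k [Hk [Ha Hl]]]|Ha].
  - left. exists k. split; auto. split. intros i Hi. rewrite <- H1, <- H2 by lia. auto.
    rewrite <- H1, <- H2 by lia. auto.
  - right. intros i Hi. rewrite <- H1, <- H2 by lia. auto.
Qed.

Lemma wlt_ext s t s' t' n : agree s s' n -> agree t t' n -> wlt s t n -> wlt s' t' n.
Proof.
  intros H1 H2 [k [Hk [Ha Hl]]].
  exists k. split; auto. split. intros i Hi. rewrite <- H1, <- H2 by lia. auto.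
  rewrite <- H1, <- H2 by lia. auto.
Qed.

Lemma wle_shift s t k n : agree s t k -> wle (shift k s) (shift k t) n -> wle s t (k + n).
Proof.
  intros Hk [[j [Hj [Ha Hl]]]|Ha].
  - left. exists (k + j). split. lia. split.
    + intros i Hi. destruct (Nat.lt_ge_cases i k). auto. specialize (Ha (i - k) ltac:(lia)).
      unfold shift in Ha. replace (k + (i - k)) with i in Ha by lia. auto.
    + auto.
  - right. intros i Hi. destruct (Nat.lt_ge_cases i k). auto. specialize (Ha (i - k) ltac:(lia)).
    unfold shift in Ha. replace (k + (i - k)) with i in Ha by lia. auto.
Qed.

Lemma wlt_shift s t k n : agree s t k -> wlt (shift k s) (shift k t) n -> wlt s t (k + n).
Proof.
  intros Hk [j [Hj [Ha Hl]]].
  exists (k + j). split. lia. split.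
  + intros i Hi. destruct (Nat.lt_ge_cases i k). auto. specialize (Ha (i - k) ltac:(lia)).
    unfold shift in Ha. replace (k + (i - k)) with i in Ha by lia. auto.
  + auto.
Qed.

Lemma shift_wle s t k n : agree s t k -> wle s t (k + n) -> wle (shift k s) (shift k t) n.
Proof.
  intros Hk H. destruct (wtrich (shift k s) (shift k t) n) as [h|[h|h]].
  - left; auto.
  - right; auto.
  - exfalso. apply (wlt_asym t s (k + n)). apply wlt_shift; auto. apply agree_sym; auto. auto.
Qed.

Lemma shift_wlt s t k n : agree s t k -> wlt s t (k + n) -> wlt (shift k s) (shift k t) n.
Proof.
  intros Hk H. destruct (wtrich (shift k s) (shift k t) n) as [h|[h|h]].
  - auto.
  - exfalso. apply (wlt_asym s t (k + n) H). right. intros i Hi.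
    destruct (Nat.lt_ge_cases i k). symmetry; auto. specialize (h (i - k) ltac:(lia)).
    unfold shift in h. replace (k + (i - k)) with i in h by lia. auto.
  - exfalso. apply (wlt_asym s t (k + n) H). left. apply wlt_shift; auto. apply agree_sym; auto.
Qed.

Lemma agree_shift s t k n : agree s t (k + n) -> agree (shift k s) (shift k t) n.
Proof. intros H i Hi. unfold shift. apply H. lia. Qed.

Lemma wlt_bar M s t n : (forall i, i < n -> s i <= M /\ t i <= M) -> wlt s t n -> wlt (sbar M t) (sbar M s) n.
Proof.
  intros Hb [k [Hk [Ha Hl]]]. exists k. split; auto. split.
  intros i Hi. unfold sbar. rewrite Ha; auto. unfold sbar. specialize (Hb k Hk). lia.
Qed.

Lemma wle_bar M s t n : (forall i, i < n -> s i <= M /\ t i <= M) -> wle s t n -> wle (sbar M t) (sbar M s) n.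
Proof.
  intros Hb [H|H]. left. apply wlt_bar; auto. right. intros i Hi. unfold sbar. rewrite H; auto.
Qed.

Lemma seq_lt_wlt s t : seq_lt s t <-> exists n, wlt s t n.
Proof.
  split.
  - intros [k [Ha Hl]]. exists (S k). exists k. split. lia. split; auto.
  - intros [n [k [Hk [Ha Hl]]]]. exists k. split; auto.
Qed.

Lemma seq_le_wle s t : seq_le s t <-> forall n, wle s t n.
Proof.
  split.
  - intros [[k [Ha Hl]]|H] n.
    + destruct (Nat.lt_ge_cases k n). left. exists k. repeat split; auto.
      right. intros i Hi. apply Ha. lia.
    + right. intros i _. auto.
  - intros H. destruct (classic (seq_eq s t)) as [e|e]. right; auto.
    left. assert (exists i, s i <> t i). { apply NNPP. intro. apply e. intro i. apply NNPP. eauto. }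
    destruct H0 as [i Hi]. destruct (H (S i)) as [h|h]. apply seq_lt_wlt; eauto.
    exfalso. apply Hi. apply h. lia.
Qed.

Lemma seq_trich s t : seq_lt s t \/ seq_eq s t \/ seq_lt t s.
Proof.
  destruct (classic (seq_eq s t)) as [e|e]. auto.
  assert (exists i, s i <> t i). { apply NNPP. intro. apply e. intro i. apply NNPP. eauto. }
  destruct H as [i Hi]. destruct (wtrich s t (S i)) as [h|[h|h]].
  left. apply seq_lt_wlt; eauto. exfalso. apply Hi, h. lia. right; right. apply seq_lt_wlt; eauto.
Qed.

Lemma seq_lt_le s t : seq_lt s t -> seq_le s t.
Proof. left; auto. Qed.

Lemma seq_le_trans s t u : seq_le s t -> seq_le t u -> seq_le s u.
Proof. rewrite !seq_le_wle. intros H1 H2 n. eapply wle_trans; eauto. Qed.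

Lemma seq_lt_le_trans s t u : seq_lt s t -> seq_le t u -> seq_lt s u.
Proof. rewrite seq_le_wle, !seq_lt_wlt. intros [n H1] H2. exists n. eapply wlt_wle_trans; eauto. Qed.

Lemma seq_le_lt_trans s t u : seq_le s t -> seq_lt t u -> seq_lt s u.
Proof. rewrite seq_le_wle, !seq_lt_wlt. intros H1 [n H2]. exists n. eapply wle_wlt_trans; eauto. Qed.

Lemma seq_lt_asym s t : seq_lt s t -> seq_le t s -> False.
Proof. rewrite seq_le_wle, seq_lt_wlt. intros [n H1] H2. eapply wlt_asym; eauto. Qed.

Lemma seq_le_ext s t s' t' : seq_eq s s' -> seq_eq t t' -> seq_le s t -> seq_le s' t'.
Proof. rewrite !seq_le_wle. intros H1 H2 H n. apply (wle_ext s t); auto; intros i _; auto. Qed.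

Lemma seq_lt_ext s t s' t' : seq_eq s s' -> seq_eq t t' -> seq_lt s t -> seq_lt s' t'.
Proof. rewrite !seq_lt_wlt. intros H1 H2 [n H]. exists n. apply (wlt_ext s t); auto; intros i _; auto. Qed.

Lemma seq_le_not_lt s t : ~ seq_lt t s -> seq_le s t.
Proof.
  intros H. destruct (seq_trich s t) as [h|[h|h]]. left; auto. right; auto. contradiction.
Qed.

Lemma seq_le_shift s t k : agree s t k -> seq_le s t -> seq_le (shift k s) (shift k t).
Proof. rewrite !seq_le_wle. intros Ha H n. apply shift_wle; auto. Qed.

Lemma seq_le_bar M s t : (forall i, s i <= M /\ t i <= M) -> seq_le s t -> seq_le (sbar M t) (sbar M s).
Proof. rewrite !seq_le_wle. intros Hb H n. apply wle_bar; auto. Qed.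

Lemma wplus_app l x : wplus (l ++ [x]) = l ++ [S x].
Proof. unfold wplus. rewrite rev_app_distr. simpl. rewrite rev_involutive. auto. Qed.

Lemma wplus_length c : length (wplus c) = length c.
Proof.
  destruct c as [|x c] using rev_ind. auto. rewrite wplus_app, !length_app. auto.
Qed.

Lemma wplus_nth c t : c <> [] -> nth t (wplus c) 0 =
  if t =? length c - 1 then S (nth t c 0) else nth t c 0.
Proof.
  intros Hc. destruct c as [|x c] using rev_ind. congruence. clear IHc.
  rewrite wplus_app, length_app. simpl.
  destruct (Nat.eqb_spec t (length c + 1 - 1)).
  - subst. replace (length c + 1 - 1) with (length c) by lia. rewrite !app_nth2 by lia.
    rewrite Nat.sub_diag. auto.
  - destruct (Nat.lt_ge_cases t (length c)). rewrite !app_nth1 by lia. auto.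
    rewrite !app_nth2 by lia. destruct (t - length c) eqn:E. lia. simpl. destruct n0; auto.
Qed.

Lemma wbar_length M c : length (wbar M c) = length c.
Proof. unfold wbar. apply length_map. Qed.

Lemma wbar_nth M c t : t < length c -> nth t (wbar M c) 0 = M - nth t c 0.
Proof.
  intros H. unfold wbar. rewrite (nth_indep _ 0 (M - 0)). apply (map_nth (fun x => M - x)).
  rewrite length_map; auto.
Qed.

Lemma wminus_app l x : wminus (l ++ [x]) = l ++ [pred x].
Proof. unfold wminus. rewrite rev_app_distr. simpl. rewrite rev_involutive. auto. Qed.

Section Blk.
Variables (M : nat) (c : list nat).

Definition blk (p x : nat) : list nat :=
  if x =? 0 then (if p =? 0 then c else wbar M (wplus c))
  else (if p =? 0 then wplus c else wbar M c).

Definition prevD (p0 : nat) (D : seqn) (j : nat) : nat :=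
  match j with 0 => p0 | S j' => D j' end.

Let L := length c.

Definition sigp (p0 : nat) (D : seqn) : seqn :=
  fun i => nth (i mod L) (blk (prevD p0 D (i / L)) (D (i / L))) 0.

Definition cvalid := 0 < L /\ (forall t, t < L -> nth t c 0 <= M) /\ nth (L - 1) c 0 < M.

Definition bit (b : bool) : nat := if b then 1 else 0.

Lemma blk_nth p x t : c <> [] -> t < L -> x <= 1 -> p <= 1 ->
  nth t (blk p x) 0 =
  if p =? 0 then nth t c 0 + x * bit (t =? L - 1)
  else M - nth t c 0 - (1 - x) * bit (t =? L - 1).
Proof.
  intros Hc Ht Hx Hp. unfold blk.
  destruct (Nat.eqb_spec x 0); destruct (Nat.eqb_spec p 0); subst.
  - simpl. lia.
  - rewrite wbar_nth by (rewrite wplus_length; auto). rewrite wplus_nth by auto.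
    fold L. destruct (t =? L - 1); simpl; lia.
  - rewrite wplus_nth by auto. fold L. replace x with 1 by lia. destruct (t =? L - 1); simpl; lia.
  - rewrite wbar_nth by auto. replace x with 1 by lia. simpl. lia.
Qed.

Lemma blk_length p x : length (blk p x) = L.
Proof. unfold blk. destruct (x =? 0), (p =? 0); rewrite ?wbar_length, ?wplus_length; auto. Qed.

Hypothesis Hv : cvalid.

Lemma cne : c <> [].
Proof. destruct Hv as [H _]. intro e. unfold L in H. rewrite e in H. simpl in H. lia. Qed.

Lemma Lpos : 0 < L.
Proof. apply Hv. Qed.

Lemma divmod_eq j t : t < L -> (L * j + t) / L = j /\ (L * j + t) mod L = t.
Proof.
  intros Ht. pose proof Lpos. split.
  - symmetry. apply (Nat.div_unique _ _ _ t); auto.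
  - symmetry. apply (Nat.mod_unique _ _ j); auto.
Qed.

Lemma sigp_blk p0 D j t : t < L -> sigp p0 D (L * j + t) = nth t (blk (prevD p0 D j) (D j)) 0.
Proof. intros Ht. unfold sigp. destruct (divmod_eq j t Ht) as [e1 e2]. rewrite e1, e2. auto. Qed.

Lemma decomp i : exists j t, t < L /\ i = L * j + t.
Proof.
  pose proof Lpos. exists (i / L), (i mod L). split. apply Nat.mod_upper_bound; lia.
  apply Nat.div_mod; lia.
Qed.

Lemma sigp_shift p0 D m i : sigp p0 D (L * m + i) = sigp (prevD p0 D m) (shift m D) i.
Proof.
  destruct (decomp i) as [j [t [Ht ->]]].
  replace (L * m + (L * j + t)) with (L * (m + j) + t) by lia.
  rewrite !sigp_blk by auto. unfold shift. f_equal. f_equal.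
  destruct j. rewrite Nat.add_0_r. auto. simpl. rewrite Nat.add_succ_r. auto.
Qed.

Lemma sigp_bar p0 D : (forall j, D j <= 1) -> p0 <= 1 ->
  seq_eq (sigp (1 - p0) (fun j => 1 - D j)) (sbar M (sigp p0 D)).
Proof.
  intros HD Hp i. destruct (decomp i) as [j [t [Ht ->]]]. unfold sbar.
  rewrite !sigp_blk by auto.
  assert (Hpr : prevD (1 - p0) (fun j => 1 - D j) j = 1 - prevD p0 D j) by (destruct j; auto).
  assert (Hpl : prevD p0 D j <= 1) by (destruct j; simpl; auto).
  rewrite Hpr. pose proof cne. specialize (HD j).
  rewrite !blk_nth by (auto; lia).
  destruct Hv as [_ [Hc Hl]]. specialize (Hc t Ht).
  remember (prevD p0 D j) as P. remember (D j) as X.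
  assert (HP : P = 0 \/ P = 1) by lia. assert (HX : X = 0 \/ X = 1) by lia.
  destruct (Nat.eqb_spec t (L - 1)) as [e|e].
  - subst t. destruct HP as [-> | ->]; destruct HX as [-> | ->]; simpl; lia.
  - destruct HP as [-> | ->]; destruct HX as [-> | ->]; simpl; lia.
Qed.

Definition bin (D : seqn) := forall j, D j <= 1.

Lemma blk_agree p t : p <= 1 -> t < L - 1 -> nth t (blk p 0) 0 = nth t (blk p 1) 0.
Proof.
  intros Hp Ht. pose proof cne. rewrite !blk_nth by (auto; lia).
  destruct (Nat.eqb_spec t (L - 1)). lia. simpl. lia.
Qed.

Lemma blk_last p : p <= 1 -> nth (L - 1) (blk p 0) 0 < nth (L - 1) (blk p 1) 0.
Proof.
  intros Hp. pose proof cne. pose proof Lpos. rewrite !blk_nth by (auto; lia).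
  rewrite Nat.eqb_refl. simpl. destruct Hv as [_ [_ Hl]].
  destruct (Nat.eqb_spec p 0); lia.
Qed.

Lemma sigp_agree p0 D D' n : agree D D' n -> agree (sigp p0 D) (sigp p0 D') (L * n).
Proof.
  intros Ha i Hi. destruct (decomp i) as [j [t [Ht ->]]].
  assert (j < n) by nia. rewrite !sigp_blk by auto.
  rewrite Ha by auto. f_equal. f_equal. destruct j; simpl; auto. apply Ha. lia.
Qed.

Lemma sigp_wlt p0 D D' n : p0 <= 1 -> bin D -> bin D' -> wlt D D' n -> wlt (sigp p0 D) (sigp p0 D') (L * n).
Proof.
  intros Hp HD HD' [k [Hk [Ha Hl]]]. pose proof Lpos.
  assert (HDk : D k = 0) by (specialize (HD' k); lia).
  assert (HDk' : D' k = 1) by (specialize (HD' k); lia).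
  assert (Hpk : prevD p0 D k = prevD p0 D' k) by (destruct k; simpl; auto).
  assert (Hpk1 : prevD p0 D k <= 1) by (destruct k; simpl; auto).
  exists (L * k + (L - 1)). split. nia. split.
  - intros i Hi. destruct (decomp i) as [j [t [Ht ->]]].
    rewrite !sigp_blk by auto.
    destruct (Nat.lt_ge_cases j k).
    + rewrite Ha by auto. f_equal. f_equal. destruct j; simpl; auto. apply Ha. lia.
    + assert (j = k) by nia. subst j. assert (t < L - 1) by nia.
      rewrite Hpk, HDk, HDk'. apply blk_agree; auto. lia.
  - rewrite !sigp_blk by lia. rewrite Hpk, HDk, HDk'. apply blk_last. lia.
Qed.

Lemma sigp_wlt_rev p0 D D' n : p0 <= 1 -> bin D -> bin D' ->
  wlt (sigp p0 D) (sigp p0 D') (L * n) -> wlt D D' n.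
Proof.
  intros Hp HD HD' H. destruct (wtrich D D' n) as [h|[h|h]]; auto; exfalso.
  - apply (wlt_irrefl (sigp p0 D) (L * n)). eapply wlt_wle_trans. exact H.
    right. apply agree_sym, sigp_agree; auto.
  - apply (wlt_asym _ _ _ H). left. apply sigp_wlt; auto.
Qed.

Lemma sigp_wle_rev p0 D D' n : p0 <= 1 -> bin D -> bin D' ->
  wle (sigp p0 D) (sigp p0 D') (L * n) -> wle D D' n.
Proof.
  intros Hp HD HD' H. destruct (wtrich D D' n) as [h|[h|h]]. left; auto. right; auto.
  exfalso. apply (wlt_asym (sigp p0 D') (sigp p0 D) (L * n)). apply sigp_wlt; auto. auto.
Qed.

Lemma sigp_seq_lt p0 D D' : p0 <= 1 -> bin D -> bin D' -> seq_lt D D' -> seq_lt (sigp p0 D) (sigp p0 D').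
Proof.
  intros Hp HD HD'. rewrite !seq_lt_wlt. intros [n H]. exists (L * n). apply sigp_wlt; auto.
Qed.

Lemma sigp_ext p0 D D' : seq_eq D D' -> seq_eq (sigp p0 D) (sigp p0 D').
Proof.
  intros H i. destruct (decomp i) as [j [t [Ht ->]]]. rewrite !sigp_blk by auto.
  rewrite H. f_equal. f_equal. destruct j; simpl; auto.
Qed.

Lemma sigp_seq_le p0 D D' : p0 <= 1 -> bin D -> bin D' -> seq_le D D' -> seq_le (sigp p0 D) (sigp p0 D').
Proof.
  intros Hp HD HD' [H|H]. left. apply sigp_seq_lt; auto. right. apply sigp_ext; auto.
Qed.

Lemma blk_le p x t : p <= 1 -> x <= 1 -> nth t (blk p x) 0 <= M.
Proof.
  intros Hp Hx. pose proof cne. destruct (Nat.lt_ge_cases t L).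
  - rewrite blk_nth by auto. destruct Hv as [_ [Hc Hl]]. specialize (Hc t H0).
    destruct (Nat.eqb_spec p 0). destruct (Nat.eqb_spec t (L-1)). subst. simpl. nia. simpl; lia. lia.
  - rewrite nth_overflow. lia. rewrite blk_length. auto.
Qed.

Lemma sigp_le p0 D : p0 <= 1 -> bin D -> forall i, sigp p0 D i <= M.
Proof.
  intros Hp HD i. unfold sigp. apply blk_le. destruct (i / L); simpl; auto. auto.
Qed.

End Blk.

Definition stv (s : gstate) : nat := match s with GA => 1 | _ => 0 end.

Lemma comp_aux_spec M c : forall d s, Forall (fun x => x <= 1) d ->
  (s = GStart -> match d with [] => True | x :: _ => x = 1 end) ->
  exists a, comp_aux M c s d = Some a /\ length a = length c * length d /\
    forall j t, j < length d -> t < length c ->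
      nth (length c * j + t) a 0 = nth t (blk M c (prevD (stv s) (fun j => nth j d 0) j) (nth j d 0)) 0.
Proof.
  induction d as [|x d IH]; intros s Hd Hs.
  - exists []. simpl. split; auto. split. lia. intros; lia.
  - inversion Hd; subst.
    assert (Hstep : exists s', comp_aux M c s (x :: d) =
        match comp_aux M c s' d with None => None | Some r => Some (blk M c (stv s) x ++ r) end
        /\ s' <> GStart /\ stv s' = x).
    { destruct s; destruct x as [|[|]]; try lia; simpl;
      try (specialize (Hs eq_refl); lia);
      eexists; (split; [reflexivity|split; [discriminate|reflexivity]]). }
    destruct Hstep as [s' [E [Hs' Hst]]].
    destruct (IH s' H2 (fun e => False_ind _ (Hs' e))) as [r [Er [Lr Nr]]].
    rewrite E, Er. eexists. split. reflexivity.
    split. rewrite length_app, blk_length, Lr. simpl. lia.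
    intros j t Hj Ht. destruct j.
    + rewrite Nat.mul_0_r, Nat.add_0_l. rewrite app_nth1 by (rewrite blk_length; auto). auto.
    + rewrite app_nth2 by (rewrite blk_length; nia). rewrite blk_length.
      replace (length c * S j + t - length c) with (length c * j + t) by nia.
      rewrite Nr by (simpl in Hj; lia). f_equal. f_equal.
      destruct j; simpl; auto.
Qed.

Lemma compose_spec M c d : Forall (fun x => x <= 1) d -> match d with [] => True | x :: _ => x = 1 end ->
  exists a, compose M c d = Some a /\ length a = length c * length d /\
    forall j t, j < length d -> t < length c ->
      nth (length c * j + t) a 0 = nth t (blk M c (prevD 0 (fun j => nth j d 0) j) (nth j d 0)) 0.
Proof. intros H1 H2. apply (comp_aux_spec M c d GStart H1). auto. Qed.

Definition binw (d : list nat) := Forall (fun x => x <= 1) d /\ nth 0 d 0 = 1 /\ nth (length d - 1) d 0 = 0.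

Lemma binw_ne d : binw d -> d <> [].
Proof. intros [_ [H _]] e. subst. simpl in H. lia. Qed.

Lemma binw_len d : binw d -> 2 <= length d.
Proof.
  intros [_ [H1 H2]]. destruct d as [|x [|y d]]; simpl in *; lia.
Qed.

Lemma binw_head d : binw d -> match d with [] => True | x :: _ => x = 1 end.
Proof. intros [_ [H _]]. destruct d; simpl in *; auto. Qed.

Lemma Forall_nth_le d : Forall (fun x => x <= 1) d -> forall j, nth j d 0 <= 1.
Proof.
  intros H j. revert j. induction H; intros j; destruct j; simpl; try lia; auto.
Qed.

Lemma per_bin d : Forall (fun x => x <= 1) d -> bin (per d).
Proof. intros H j. unfold per. pose proof (Forall_nth_le d H (j mod length d)). lia. Qed.

Lemma mod_S J m : 0 < m -> (S J mod m = S (J mod m) /\ S (J mod m) < m) \/ (S J mod m = 0 /\ J mod m = m - 1).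
Proof.
  intros Hm. pose proof (Nat.div_mod J m ltac:(lia)). pose proof (Nat.mod_upper_bound J m ltac:(lia)).
  destruct (Nat.lt_ge_cases (S (J mod m)) m).
  - left. split; auto. symmetry. apply (Nat.mod_unique _ _ (J / m)); lia.
  - right. split; [|lia]. symmetry. apply (Nat.mod_unique _ _ (S (J / m))); lia.
Qed.

Lemma mod_block L m J t : 0 < L -> 0 < m -> t < L -> (L * J + t) mod (L * m) = L * (J mod m) + t.
Proof.
  intros HL Hm Ht. pose proof (Nat.div_mod J m ltac:(lia)). pose proof (Nat.mod_upper_bound J m ltac:(lia)).
  symmetry. apply (Nat.mod_unique _ _ (J / m)). nia. nia.
Qed.

Section Ident.
Variables (M : nat) (c : list nat).
Hypothesis Hv : cvalid M c.
Let L := length c.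

Lemma I1 d a : binw d -> compose M c d = Some a -> seq_eq (per a) (sigp M c 0 (per d)).
Proof.
  intros Hd Ha. pose proof (binw_ne d Hd) as Hne. pose proof (binw_len d Hd).
  destruct Hd as [Hf [H0 Hl]].
  destruct (compose_spec M c d Hf (binw_head d (conj Hf (conj H0 Hl)))) as [a' [E [La Na]]].
  rewrite Ha in E. injection E as <-.
  intro i. destruct (decomp M c Hv i) as [J [t [Ht ->]]]. fold L in Ht |- *.
  rewrite sigp_blk by auto. unfold per at 1. rewrite La.
  pose proof (Lpos M c Hv). fold L in H1.
  rewrite mod_block by (auto; lia). rewrite Na by (auto; apply Nat.mod_upper_bound; lia).
  f_equal. f_equal.
  - destruct J. rewrite Nat.Div0.mod_0_l. auto.
    simpl. unfold per. destruct (mod_S J (length d) ltac:(lia)) as [[e1 e2]|[e1 e2]]; rewrite e1; simpl; auto.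
    rewrite e2. auto.
Qed.

Lemma I2 d a : binw d -> compose M c d = Some a ->
  seq_eq (pre_per (wplus a) (wbar M a)) (sigp M c 0 (pre_per (wplus d) (wbar 1 d))).
Proof.
  intros Hd Ha. pose proof (binw_ne d Hd) as Hne. pose proof (binw_len d Hd) as Hm2.
  pose proof (I1 d a Hd Ha) as HI1.
  destruct Hd as [Hf [H0 Hl]].
  destruct (compose_spec M c d Hf (binw_head d (conj Hf (conj H0 Hl)))) as [a' [E [La Na]]].
  rewrite Ha in E. injection E as <-.
  pose proof (Lpos M c Hv) as HL. fold L in HL, La, Na.
  set (E := pre_per (wplus d) (wbar 1 d)).
  intro i. destruct (Nat.lt_ge_cases i (L * length d)) as [Hi|Hi].
  - unfold pre_per at 1. rewrite wplus_length, La. destruct (Nat.ltb_spec i (L * length d)); [|lia].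
    destruct (decomp M c Hv i) as [J [t [Ht ->]]]. fold L in Ht.
    rewrite sigp_blk by auto.
    assert (HJ : J < length d) by nia.
    rewrite wplus_nth by (intro e; subst a; simpl in La; nia).
    rewrite La. rewrite Na by auto.
    assert (HEJ : E J = if J =? length d - 1 then 1 else nth J d 0).
    { unfold E, pre_per. rewrite wplus_length. destruct (Nat.ltb_spec J (length d)); [|lia].
      rewrite wplus_nth by auto. destruct (J =? length d - 1) eqn:e; auto. apply Nat.eqb_eq in e. subst J. rewrite Hl; auto. }
    assert (HPJ : prevD 0 E J = prevD 0 (fun j => nth j d 0) J).
    { destruct J; auto. simpl. unfold E, pre_per. rewrite wplus_length. destruct (Nat.ltb_spec J (length d)); [|lia].
      rewrite wplus_nth by auto. destruct (Nat.eqb_spec J (length d - 1)); auto. lia. }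
    rewrite HEJ, HPJ.
    assert (Hp : prevD 0 (fun j => nth j d 0) J <= 1) by (destruct J; simpl; [lia|pose proof (Forall_nth_le d Hf J); lia]).
    pose proof (cne M c Hv) as Hcne.
    destruct (Nat.eqb_spec J (length d - 1)) as [e|e].
    + subst J. rewrite Hl. rewrite !blk_nth by (auto; lia).
      fold L. destruct (Nat.eqb_spec t (L - 1)) as [e2|e2].
      * subst t. replace (L * (length d - 1) + (L - 1)) with (L * length d - 1) by nia. rewrite Nat.eqb_refl.
        simpl. destruct Hv as [_ [_ Hlt]]. fold L in Hlt. destruct (Nat.eqb_spec (prevD 0 (fun j => nth j d 0) (length d - 1)) 0); lia.
      * destruct (Nat.eqb_spec (L * (length d - 1) + t) (L * length d - 1)). nia. simpl. lia.
    + change (length c) with L. destruct (Nat.eqb_spec (L * J + t) (L * length d - 1)). nia. auto.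
  - unfold pre_per at 1. rewrite wplus_length, La. destruct (Nat.ltb_spec i (L * length d)); [lia|].
    rewrite wbar_length, La.
    replace i with (L * length d + (i - L * length d)) at 2 by lia.
    rewrite sigp_shift by auto.
    assert (Hpm : prevD 0 E (length d) = 1).
    { assert (exists n, length d = S n) as [n e] by (exists (length d - 1); lia).
      rewrite e. simpl. unfold E, pre_per. rewrite wplus_length, e.
      destruct (Nat.ltb_spec n (S n)); [|lia]. rewrite wplus_nth by auto. rewrite e.
      replace (S n - 1) with n by lia. rewrite Nat.eqb_refl. rewrite e in Hl. replace (S n - 1) with n in Hl by lia. rewrite Hl. auto. }
    rewrite Hpm.
    assert (Hsh : seq_eq (shift (length d) E) (fun j => 1 - per d j)).
    { intro j. unfold shift, E, pre_per. rewrite wplus_length, wbar_length.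
      destruct (Nat.ltb_spec (length d + j) (length d)). lia.
      replace (length d + j - length d) with j by lia. rewrite wbar_nth. auto. apply Nat.mod_upper_bound. lia. }
    rewrite (sigp_ext M c Hv 1 _ _ Hsh).
    pose proof (sigp_bar M c Hv 0 (per d) (per_bin d Hf) ltac:(lia)) as Hb. change (1 - 0) with 1 in Hb.
    rewrite Hb. unfold sbar. rewrite <- HI1. unfold per. rewrite La.
    rewrite wbar_nth by (rewrite La; apply Nat.mod_upper_bound; nia). auto.
Qed.

Lemma I3 : seq_eq (sigp M c 0 (fun _ => 1)) (pre_per (wplus c) (wbar M c)).
Proof.
  intro i. destruct (decomp M c Hv i) as [J [t [Ht ->]]]. fold L in Ht |- *.
  rewrite sigp_blk by auto. unfold pre_per. rewrite wplus_length. fold L.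
  pose proof (Lpos M c Hv). fold L in H.
  destruct J.
  - simpl. destruct (Nat.ltb_spec (L * 0 + t) L). replace (L * 0 + t) with t by lia. auto. lia.
  - simpl. destruct (Nat.ltb_spec (L * S J + t) L). nia. rewrite wbar_length. fold L.
    replace (L * S J + t - L) with (L * J + t) by nia.
    rewrite Nat.add_comm, Nat.mul_comm, Nat.Div0.mod_add. rewrite Nat.mod_small by auto. auto.
Qed.

End Ident.

Lemma bitsum_double n : bitsum (2 * n) = bitsum n.
Proof. unfold bitsum. rewrite Nat2N.inj_double. destruct (N.of_nat n); auto. Qed.

Lemma bitsum_sdouble n : bitsum (S (2 * n)) = S (bitsum n).
Proof. unfold bitsum. rewrite Nat2N.inj_succ_double. destruct (N.of_nat n); auto. Qed.

Lemma tau_le i : tau i <= 1.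
Proof. unfold tau. destruct (Nat.odd _); lia. Qed.

Lemma tau_double n : tau (2 * n) = tau n.
Proof. unfold tau. rewrite bitsum_double. auto. Qed.

Lemma tau_sdouble n : tau (S (2 * n)) = 1 - tau n.
Proof. unfold tau. rewrite bitsum_sdouble, Nat.odd_succ, <- Nat.negb_odd. destruct (Nat.odd _); auto. Qed.

Lemma tau_0 : tau 0 = 0.
Proof. reflexivity. Qed.

Lemma tau_pow j : tau (2 ^ j) = 1.
Proof. induction j. reflexivity. rewrite Nat.pow_succ_r', tau_double. auto. Qed.

Lemma nth_map_seq (f : nat -> nat) n i : i < n -> nth i (map f (seq 0 n)) 0 = f i.
Proof.
  intros H. rewrite (nth_indep _ 0 (f 0)) by (rewrite length_map, length_seq; auto).
  rewrite map_nth, seq_nth; auto.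
Qed.

Definition tmf (j i : nat) : nat := if i =? 2 ^ j - 1 then 0 else tau (S i).
Definition tm (j : nat) : list nat := map (tmf j) (seq 0 (2 ^ j)).

Lemma tm_length j : length (tm j) = 2 ^ j.
Proof. unfold tm. rewrite length_map, length_seq. auto. Qed.

Lemma tm_nth j i : i < 2 ^ j -> nth i (tm j) 0 = tmf j i.
Proof. intros; unfold tm; apply nth_map_seq; auto. Qed.

Lemma pow2_pos j : 0 < 2 ^ j.
Proof. apply Nat.neq_0_lt_0, Nat.pow_nonzero. lia. Qed.

Lemma Forall_le1 l : (forall i, i < length l -> nth i l 0 <= 1) -> Forall (fun x => x <= 1) l.
Proof.
  induction l; intros H; constructor. apply (H 0); simpl; lia.
  apply IHl. intros i Hi. apply (H (S i)). simpl; lia.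
Qed.

Lemma tm_binw j : 1 <= j -> binw (tm j).
Proof.
  intros Hj. assert (2 <= 2 ^ j) by (replace 2 with (2 ^ 1) at 1 by auto; apply Nat.pow_le_mono_r; lia).
  split; [|split].
  - apply Forall_le1. intros i Hi. rewrite tm_length in Hi. rewrite tm_nth by auto. unfold tmf.
    destruct (_ =? _). lia. apply tau_le.
  - rewrite tm_nth by lia. unfold tmf. destruct (Nat.eqb_spec 0 (2 ^ j - 1)). lia. reflexivity.
  - rewrite tm_length, tm_nth by lia. unfold tmf. rewrite Nat.eqb_refl. auto.
Qed.

Lemma cvalid10 : cvalid 1 [1; 0].
Proof. split. simpl; lia. split. intros t Ht. destruct t as [|[|]]; simpl in *; lia. simpl. lia. Qed.

Lemma blk10 p x t : p <= 1 -> x <= 1 -> t < 2 -> nth t (blk 1 [1;0] p x) 0 = if t =? 0 then 1 - p else x.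
Proof.
  intros Hp Hx Ht. destruct p as [|[|]]; destruct x as [|[|]]; destruct t as [|[|]]; try lia; reflexivity.
Qed.

Lemma compose_tm j : 1 <= j -> compose 1 [1; 0] (tm j) = Some (tm (S j)).
Proof.
  intros Hj. destruct (tm_binw j Hj) as [Hf [H0 Hl]].
  destruct (compose_spec 1 [1;0] (tm j) Hf (binw_head _ (tm_binw j Hj))) as [a [E [La Na]]].
  rewrite E. f_equal. apply nth_ext with 0 0.
  - rewrite La, !tm_length. simpl length. rewrite Nat.pow_succ_r'. auto.
  - intros i Hi. rewrite La, tm_length in Hi. simpl length in Hi, Na.
    assert (exists J t, t < 2 /\ i = 2 * J + t) as [J [t [Ht ->]]] by (exists (i / 2), (i mod 2); split; [apply Nat.mod_upper_bound; lia| apply Nat.div_mod; lia]).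
    assert (HJ : J < 2 ^ j) by lia.
    rewrite Na by (rewrite ?tm_length; simpl; lia).
    assert (Hp : prevD 0 (fun j0 => nth j0 (tm j) 0) J = tau J).
    { destruct J. auto. simpl. rewrite tm_nth by lia. unfold tmf. destruct (Nat.eqb_spec J (2 ^ j - 1)). lia. auto. }
    rewrite Hp. rewrite blk10 by (auto using tau_le; rewrite tm_nth by auto; unfold tmf; destruct (_ =? _); auto using tau_le).
    rewrite (tm_nth j J) by auto.
    rewrite (tm_nth (S j)) by (simpl; lia). unfold tmf. change (2 ^ S j) with (2 * 2 ^ j).
    destruct t as [|[|]]; [| |lia].
    + destruct (Nat.eqb_spec (2 * J + 0) (2 * 2 ^ j - 1)). lia. rewrite Nat.add_0_r, tau_sdouble. auto.
    + change (1 =? 0) with false. cbv iota.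
      destruct (Nat.eqb_spec J (2 ^ j - 1)); destruct (Nat.eqb_spec (2 * J + 1) (2 * 2 ^ j - 1)); try lia.
      replace (S (2 * J + 1)) with (2 * S J) by lia. rewrite tau_double. auto.
Qed.

Definition S10 (D : seqn) : seqn := sigp 1 [1; 0] 0 D.
Definition TT : seqn := fun _ => 1.
Definition iterS (k : nat) (D : seqn) : seqn := Nat.iter k S10 D.

Lemma iterS_S k D : iterS (S k) D = S10 (iterS k D).
Proof. reflexivity. Qed.

Lemma iterS_ext k D D' : seq_eq D D' -> seq_eq (iterS k D) (iterS k D').
Proof. induction k; intros H. auto. rewrite !iterS_S. apply sigp_ext. apply cvalid10. auto. Qed.

Lemma S10_bin D : bin D -> bin (S10 D).
Proof. intros HD i. apply (sigp_le 1 [1;0] cvalid10); auto. Qed.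

Lemma iterS_bin k D : bin D -> bin (iterS k D).
Proof. induction k; intros H. auto. rewrite iterS_S. apply S10_bin; auto. Qed.

Lemma binw_compose10 w w' : binw w -> compose 1 [1;0] w = Some w' -> binw w'.
Proof.
  intros Hw Hc. pose proof (binw_len w Hw) as Hl2. destruct Hw as [Hf [H0 Hl]].
  destruct (compose_spec 1 [1;0] w Hf (binw_head _ (conj Hf (conj H0 Hl)))) as [a [E [La Na]]].
  rewrite Hc in E. injection E as <-. simpl length in La, Na.
  assert (HpL : forall J, prevD 0 (fun j => nth j w 0) J <= 1) by (intros [|J]; simpl; [lia|apply Forall_nth_le; auto]).
  split; [|split].
  - apply Forall_le1. intros i Hi. rewrite La in Hi.
    assert (exists J t, t < 2 /\ i = 2 * J + t) as [J [t [Ht ->]]] by (exists (i / 2), (i mod 2); split; [apply Nat.mod_upper_bound; lia| apply Nat.div_mod; lia]).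
    rewrite Na by lia. apply (blk_le 1 [1;0] cvalid10); auto. apply Forall_nth_le; auto.
  - change (nth 0 w' 0) with (nth (2*0+0) w' 0). rewrite Na by lia. rewrite blk10 by (simpl; try rewrite H0; lia). reflexivity.
  - rewrite La. replace (2 * length w - 1) with (2 * (length w - 1) + 1) by lia. rewrite Na by lia.
    rewrite Hl. rewrite blk10 by (auto; lia). auto.
Qed.

Lemma iter_w k b : binw b -> forall w, comp10_iter k b = Some w ->
  binw w /\ seq_eq (per w) (iterS k (per b)) /\
  seq_eq (pre_per (wplus w) (wbar 1 w)) (iterS k (pre_per (wplus b) (wbar 1 b))).
Proof.
  intros Hb. induction k; intros w Hw.
  - simpl in Hw. injection Hw as <-. split; auto. split; intro; auto.
  - simpl in Hw. destruct (comp10_iter k b) as [w0|] eqn:E0; [|discriminate].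
    destruct (IHk w0 eq_refl) as [Hb0 [H1 H2]].
    split. eapply binw_compose10; eauto.
    split.
    + intro i. rewrite (I1 1 [1;0] cvalid10 w0 w Hb0 Hw). rewrite iterS_S. apply sigp_ext. apply cvalid10. auto.
    + intro i. rewrite (I2 1 [1;0] cvalid10 w0 w Hb0 Hw). rewrite iterS_S. apply sigp_ext. apply cvalid10. auto.
Qed.

Lemma iterTT j : seq_eq (iterS j TT) (pre_per (wplus (tm j)) (wbar 1 (tm j))).
Proof.
  destruct j.
  - intro i. simpl. unfold TT, pre_per. simpl. destruct i. auto. simpl. destruct (i - 0 mod 1); [reflexivity|destruct n; reflexivity].
  - induction j.
    + intro i. change (iterS 1 TT) with (sigp 1 [1;0] 0 (fun _ => 1)). rewrite (I3 1 [1;0] cvalid10). reflexivity.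
    + intro i. rewrite iterS_S. unfold S10. rewrite (sigp_ext 1 [1;0] cvalid10 0 _ _ IHj).
      rewrite <- (I2 1 [1;0] cvalid10 (tm (S j)) (tm (S (S j)))). auto.
      apply tm_binw; lia. apply compose_tm; lia.
Qed.

Lemma unit_cases M : 1 <= M ->
  (exists k, M = 2 * k /\ 1 <= k /\ unit_lift M = [k] /\ Nat.even M = true /\ M / 2 = k) \/
  (exists k, M = 2 * k + 1 /\ unit_lift M = [S k; k] /\ Nat.even M = false /\ M / 2 = k).
Proof.
  intros HM. destruct (Nat.Even_or_Odd M) as [[k Hk]|[k Hk]].
  - left. exists k. assert (Nat.even M = true) by (apply Nat.even_spec; exists k; auto).
    assert (M / 2 = k) by (subst; rewrite Nat.mul_comm, Nat.div_mul; lia).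
    unfold unit_lift. rewrite H, H0. repeat split; auto; lia.
  - right. exists k. assert (Nat.even M = false).
    { destruct (Nat.even M) eqn:e; auto. apply Nat.even_spec in e. destruct e as [k' Hk']. lia. }
    assert (M / 2 = k) by (symmetry; apply (Nat.div_unique _ _ _ 1); lia).
    unfold unit_lift. rewrite H, H0. repeat split; auto.
Qed.

Lemma cvalid_unit M : 1 <= M -> cvalid M (unit_lift M).
Proof.
  intros HM. destruct (unit_cases M HM) as [[k [-> [Hk [-> _]]]]|[k [-> [-> _]]]].
  - split. simpl; lia. split. intros [|t] Ht; simpl in *; lia. simpl. lia.
  - split. simpl; lia. split. intros [|[|t]] Ht; simpl in *; lia. simpl. lia.
Qed.

Lemma KL M J t : 1 <= M -> t < length (unit_lift M) ->
  lam M (S (length (unit_lift M) * J + t)) = nth t (blk M (unit_lift M) (tau J) (tau (S J))) 0.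
Proof.
  intros HM Ht. pose proof (cvalid_unit M HM) as Hv. pose proof (cne M _ Hv) as Hne.
  rewrite blk_nth by (auto using tau_le).
  pose proof (tau_le J). pose proof (tau_le (S J)).
  destruct (unit_cases M HM) as [[k [Mk [Hk [Hu [He Hd]]]]]|[k [Mk [Hu [He Hd]]]]];
  rewrite Hu in *; unfold lam; rewrite He, Hd; simpl length in *.
  - assert (t = 0) by lia. subst t. simpl. rewrite Nat.sub_0_r, Nat.mul_1_r.
    rewrite !Nat.add_0_r. remember (tau J) as A; remember (tau (S J)) as B2. destruct A as [|[|]]; destruct B2 as [|[|]]; simpl; lia.
  - destruct t as [|[|]]; [| |lia].
    + replace (S (2 * J + 0)) with (S (2 * J)) by lia. rewrite tau_sdouble. simpl.
      destruct (tau J) as [|[|]]; simpl; lia.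
    + replace (S (2 * J + 1)) with (2 * S J) by lia. rewrite tau_double. simpl.
      destruct (tau J) as [|[|]]; destruct (tau (S J)) as [|[|]]; simpl; lia.
Qed.

Lemma lamN_len M j : 1 <= M -> lamN M (S j) = length (unit_lift M) * 2 ^ j.
Proof.
  intros HM. unfold lamN. destruct (unit_cases M HM) as [[k [Mk [Hk [Hu [He Hd]]]]]|[k [Mk [Hu [He Hd]]]]];
  rewrite He, Hu; simpl. rewrite Nat.sub_0_r. lia. lia.
Qed.

Lemma wbwp M a : a <> [] -> nth (length a - 1) a 0 < M -> wplus (wbar M (wplus a)) = wbar M a.
Proof.
  intros Hne Hl. destruct a as [|x a] using rev_ind. congruence. clear IHa.
  rewrite wplus_app. unfold wbar. rewrite !map_app. simpl. rewrite wplus_app.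
  rewrite length_app in Hl. simpl in Hl. replace (length a + 1 - 1) with (length a) in Hl by lia.
  rewrite app_nth2 in Hl by lia. rewrite Nat.sub_diag in Hl. simpl in Hl.
  f_equal. f_equal. lia.
Qed.

Lemma Ilam M j : 1 <= M ->
  seq_eq (sigp M (unit_lift M) 0 (iterS j TT))
         (pre_per (lam_word M (S j)) (wplus (wbar M (lam_word M (S j))))).
Proof.
  intros HM. pose proof (cvalid_unit M HM) as Hv. pose proof (cne M _ Hv) as Hne.
  set (u := unit_lift M) in *. set (L := length u).
  pose proof (Lpos M u Hv) as HL.
  destruct j.
  - assert (E : lam_word M 1 = wplus u).
    { apply nth_ext with 0 0. unfold lam_word. rewrite length_map, length_seq, wplus_length, (lamN_len M 0 HM). fold u L. simpl; lia.
      intros i Hi. unfold lam_word in Hi |- *. rewrite length_map, length_seq, (lamN_len M 0 HM) in Hi. fold u L in Hi. simpl in Hi.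
      rewrite nth_map_seq by (rewrite (lamN_len M 0 HM); fold u L; simpl; lia).
      replace i with (L * 0 + i) at 1 by lia. unfold L, u. rewrite KL by (fold u L; lia). rewrite tau_0. reflexivity. }
    rewrite E, wbwp; auto. apply I3; auto. apply Hv.
  - intro i. simpl iterS. rewrite (sigp_ext M u Hv 0 _ _ (iterTT (S j))).
    destruct (compose_spec M u (tm (S j))) as [a [Ea [La Na]]]. apply tm_binw; lia. apply binw_head, tm_binw; lia.
    rewrite <- (I2 M u Hv (tm (S j)) a (tm_binw (S j) ltac:(lia)) Ea). rewrite tm_length in La, Na. fold L in La, Na.
    assert (Hane : a <> []).
    { intro e. rewrite e in La. change (length (@nil nat)) with 0 in La. pose proof (pow2_pos (S j)). nia. }
    assert (Hlast : nth (length a - 1) a 0 < M).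
    { rewrite La. replace (L * 2 ^ S j - 1) with (L * (2 ^ S j - 1) + (L - 1)) by (pose proof (pow2_pos (S j)); nia).
      pose proof (pow2_pos (S j)). rewrite Na by lia.
      assert (Hx : nth (2 ^ S j - 1) (tm (S j)) 0 = 0) by (rewrite tm_nth by lia; unfold tmf; rewrite Nat.eqb_refl; auto).
      assert (Hp : prevD 0 (fun j0 => nth j0 (tm (S j)) 0) (2 ^ S j - 1) <= 1).
      { destruct (2 ^ S j - 1) eqn:E2. simpl; lia. simpl. rewrite tm_nth by lia. unfold tmf. destruct (_ =? _). lia. apply tau_le. }
      rewrite Hx. rewrite blk_nth by (auto; lia).
      rewrite Nat.eqb_refl. destruct Hv as [_ [_ Hvl]]. fold L in Hvl.
      destruct (_ =? 0); simpl; lia. }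
    assert (E : lam_word M (S (S j)) = wplus a).
    { apply nth_ext with 0 0. unfold lam_word. rewrite length_map, length_seq, wplus_length, (lamN_len M (S j) HM). fold u L. lia.
      intros i0 Hi. unfold lam_word in Hi |- *. rewrite length_map, length_seq, (lamN_len M (S j) HM) in Hi. fold u L in Hi.
      rewrite nth_map_seq by (rewrite (lamN_len M (S j) HM); fold u L; lia).
      destruct (decomp M u Hv i0) as [J [t [Ht ->]]]. fold L in Ht |- *.
      assert (HJ : J < 2 ^ S j) by nia.
      rewrite wplus_nth by auto. rewrite La, Na by auto.
      unfold L, u. rewrite KL by (fold u L; lia). fold u L.
      assert (Hp : prevD 0 (fun j0 => nth j0 (tm (S j)) 0) J = tau J).
      { destruct J. auto. simpl. rewrite tm_nth by lia. unfold tmf. destruct (Nat.eqb_spec J (2 ^ S j - 1)). lia. auto. }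
      rewrite Hp, tm_nth by auto. unfold tmf.
      destruct (Nat.eqb_spec J (2 ^ S j - 1)) as [e|e].
      + subst J. replace (S (2 ^ S j - 1)) with (2 ^ S j) by (pose proof (pow2_pos (S j)); lia). rewrite tau_pow.
        rewrite !blk_nth by (auto using tau_le; lia). fold L.
        destruct (Nat.eqb_spec (L * (2 ^ S j - 1) + t) (L * 2 ^ S j - 1)); destruct (Nat.eqb_spec t (L - 1)); try nia;
        destruct Hv as [_ [Hvb Hvl]]; fold L in Hvl; specialize (Hvb t Ht); unfold bit; destruct (tau (2 ^ S j - 1) =? 0); try subst t; lia.
      + destruct (Nat.eqb_spec (L * J + t) (L * 2 ^ S j - 1)). nia. auto. }
    rewrite E, wbwp; auto.
Qed.

Lemma pad_overflow x j : length x <= j -> pad x j = 0.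
Proof. intros. unfold pad. apply nth_overflow. auto. Qed.

Lemma word_lt_wlt x y n : length x = n -> length y = n -> word_lt x y -> wlt (pad x) (pad y) n.
Proof.
  intros Hx Hy [k [Ha Hl]]. destruct (Nat.lt_ge_cases k n).
  - exists k. split; auto.
  - rewrite !pad_overflow in Hl by lia. lia.
Qed.

Lemma word_le_wle x y n : length x = n -> length y = n -> word_le x y -> wle (pad x) (pad y) n.
Proof.
  intros Hx Hy [H|H]. left. apply word_lt_wlt; auto. right. intros i _. auto.
Qed.

Lemma wlt_word_lt x y n X Y : agree X (pad x) n -> agree Y (pad y) n -> wlt X Y n -> word_lt x y.
Proof.
  intros H1 H2 [k [Hk [Ha Hl]]]. exists k. split.
  - intros i Hi. rewrite <- H1, <- H2 by lia. auto.
  - rewrite <- H1, <- H2 by lia. auto.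
Qed.

Lemma wle_word_le x y n X Y : length x = n -> length y = n ->
  agree X (pad x) n -> agree Y (pad y) n -> wle X Y n -> word_le x y.
Proof.
  intros Lx Ly H1 H2 [H|H]. left. eapply wlt_word_lt; eauto.
  right. intro i. destruct (Nat.lt_ge_cases i n).
  - rewrite <- H1, <- H2 by auto. auto.
  - rewrite !pad_overflow by lia. auto.
Qed.

Lemma per_lt a i : i < length a -> per a i = nth i a 0.
Proof. intros H. unfold per. rewrite Nat.mod_small; auto. Qed.

Lemma per_period a i : 0 < length a -> per a (length a + i) = per a i.
Proof.
  intros H. unfold per. f_equal. rewrite Nat.add_comm.
  replace (i + length a) with (i + 1 * length a) by lia. apply Nat.Div0.mod_add.
Qed.

Lemma per_period_k a k i : 0 < length a -> per a (length a * k + i) = per a i.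
Proof.
  intros H. induction k. rewrite Nat.mul_0_r. auto.
  replace (length a * S k + i) with (length a + (length a * k + i)) by lia. rewrite per_period; auto.
Qed.

Lemma per_mod a i : 0 < length a -> per a i = per a (i mod length a).
Proof.
  intros H. rewrite (Nat.div_mod i (length a)) at 1 by lia. rewrite per_period_k; auto.
Qed.

Lemma agree_skipn a i n : i + n <= length a -> agree (pad (skipn i a)) (shift i (per a)) n.
Proof.
  intros H j Hj. unfold pad, shift. rewrite nth_skipn. rewrite per_lt by lia. auto.
Qed.

Lemma agree_firstn a n : n <= length a -> agree (pad (firstn n a)) (per a) n.
Proof.
  intros H j Hj. unfold pad. rewrite nth_firstn. destruct (Nat.ltb_spec j n); [|lia].
  rewrite per_lt by lia. auto.
Qed.

Lemma agree_wbar M x n : n <= length x -> agree (pad (wbar M x)) (sbar M (pad x)) n.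
Proof. intros H j Hj. unfold pad, sbar. rewrite wbar_nth by lia. auto. Qed.

Lemma length_skipn' (a : list nat) i : length (skipn i a) = length a - i.
Proof. apply length_skipn. Qed.

Lemma fund_windows M a : (2 <= length a) ->
  (forall i, 1 <= i < length a ->
       word_le (wbar M (firstn (length a - i) a)) (skipn i a) /\
       word_lt (skipn i a) (firstn (length a - i) a)) ->
  forall i, 1 <= i < length a ->
    wlt (shift i (per a)) (per a) (length a - i) /\
    wle (sbar M (per a)) (shift i (per a)) (length a - i).
Proof.
  intros Hm H i Hi. destruct (H i Hi) as [H1 H2]. split.
  - apply (word_lt_wlt _ _ (length a - i)) in H2; [| rewrite length_skipn; auto | rewrite length_firstn; lia].
    apply (wlt_ext (pad (skipn i a)) (pad (firstn (length a - i) a))); [apply agree_skipn; lia| apply agree_firstn; lia| auto].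
  - apply (word_le_wle _ _ (length a - i)) in H1; [| rewrite wbar_length, length_firstn; lia | rewrite length_skipn; auto].
    apply (wle_ext (pad (wbar M (firstn (length a - i) a))) (pad (skipn i a))); [| apply agree_skipn; lia| exact H1].
    intros j Hj. rewrite (agree_wbar M (firstn (length a - i) a) (length a - i)); [|rewrite length_firstn; lia|auto].
    unfold sbar. rewrite (agree_firstn a (length a - i)); auto; lia.
Qed.

Lemma agree_periodic s t m : 0 < m -> (forall i, s (m + i) = s i) -> (forall i, t (m + i) = t i) ->
  agree s t m -> seq_eq s t.
Proof.
  intros Hm Hs Ht Ha i. induction i as [i IH] using (well_founded_induction lt_wf).
  destruct (Nat.lt_ge_cases i m). auto.
  replace i with (m + (i - m)) by lia. rewrite Hs, Ht. apply IH. lia.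
Qed.

Lemma wlt_seq_lt s t n : wlt s t n -> seq_lt s t.
Proof. intros H. apply seq_lt_wlt. eauto. Qed.

Lemma shift_shift i j s : seq_eq (shift i (shift j s)) (shift (j + i) s).
Proof. intro k. unfold shift. f_equal. lia. Qed.

Lemma fund_seq M a : 2 <= length a -> Forall (fun c => c <= M) a ->
  (forall i, 1 <= i < length a ->
     wlt (shift i (per a)) (per a) (length a - i) /\
     wle (sbar M (per a)) (shift i (per a)) (length a - i)) ->
  forall i, (i mod length a <> 0) ->
    seq_lt (shift i (per a)) (per a) /\ seq_le (sbar M (per a)) (shift i (per a)).
Proof.
  intros Hm Hf HW i Hi. set (m := length a) in *. set (s := per a).
  assert (Hsh : seq_eq (shift i s) (shift (i mod m) s)).
  { intro j. unfold shift, s. rewrite (per_mod a (i + j)) by lia. rewrite (per_mod a (i mod m + j)) by lia.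
    f_equal. fold m. rewrite Nat.Div0.add_mod_idemp_l. auto. }
  assert (Hper : forall j, s (m + j) = s j) by (intro j; unfold s, m; apply per_period; lia).
  set (i' := i mod m). assert (Hi' : 1 <= i' < m) by (split; [lia| apply Nat.mod_upper_bound; lia]).
  assert (Hle : forall j, s j <= M).
  { intro j. unfold s, per. rewrite Forall_forall in Hf. destruct (Nat.lt_ge_cases (j mod length a) (length a)).
    apply Hf. apply nth_In. auto. rewrite nth_overflow by auto. lia. }
  destruct (HW i' Hi') as [H1 H2]. split.
  - eapply seq_lt_ext. intro; symmetry; apply Hsh. intro; auto. eapply wlt_seq_lt; eauto.
  - eapply seq_le_ext. intro; auto. intro; symmetry; apply Hsh.
    destruct H2 as [H2|H2]. left. eapply wlt_seq_lt; eauto.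
    (* agree on m - i'; look at the next i' letters *)
    destruct (HW (m - i') ltac:(lia)) as [_ H3].
    replace (m - (m - i')) with i' in H3 by lia.
    apply (wle_bar M) in H3; [| intros; split; [unfold sbar; lia| apply Hle]].
    assert (H4 : wle (sbar M s) (shift i' s) m).
    { replace m with ((m - i') + i') by lia. apply wle_shift; auto.
      eapply wle_ext; [| | exact H3].
      - intros j Hj. reflexivity.
      - intros j Hj. unfold sbar, shift. change (per a) with s. replace (i' + (m - i' + j)) with (m + j) by lia.
        rewrite Hper. pose proof (Hle j). lia. }
    destruct H4 as [H4|H4]. left. eapply wlt_seq_lt; eauto.
    right. apply agree_periodic with m; auto. lia.
    + intro j. unfold sbar. change (per a) with s. rewrite Hper. auto.
    + intro j. unfold shift. change (per a) with s. replace (i mod m + (m + j)) with (m + (i mod m + j)) by lia. rewrite Hper. auto.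
Qed.

Lemma greatest_below (P : nat -> Prop) i : (exists j, j < i /\ P j) ->
  exists j, j < i /\ P j /\ forall k, j < k < i -> ~ P k.
Proof.
  intros [j0 [Hj0 Pj0]].
  destruct (least_ex (fun x => x < i /\ P (i - 1 - x))) as [x [[Hx Px] Hmin]].
  { exists (i - 1 - j0). split. lia. replace (i - 1 - (i - 1 - j0)) with j0 by lia. auto. }
  exists (i - 1 - x). split. lia. split. auto.
  intros k Hk Pk. apply (Hmin (i - 1 - k)). lia. split. lia. replace (i - 1 - (i - 1 - k)) with k by lia. auto.
Qed.

Section DI.
Variables (D : seqn) (n : nat).
Hypothesis HD : bin D.
Hypothesis H0 : D 0 = 1.
Hypothesis Hlast : D (n - 1) = 0.
Hypothesis Hn : 1 <= n.
Hypothesis Hyp : forall i, 1 <= i < n ->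
  (D (i - 1) = 0 -> wlt (shift i D) D (n - i)) /\ (D (i - 1) = 1 -> wle (sbar 1 D) (shift i D) (n - i)).

Lemma DI_U : forall i, 1 <= i < n -> wlt (shift i D) D (n - i).
Proof.
  intros i. induction i as [i IH] using (well_founded_induction lt_wf). intros Hi.
  assert (HDi := HD (i - 1)).
  destruct (Nat.eq_dec (D (i - 1)) 0) as [e|e]. apply (Hyp i Hi); auto.
  assert (e1 : D (i - 1) = 1) by lia.
  destruct (classic (exists j, j < i /\ D j = 0)) as [Hex|Hnex].
  - destruct (greatest_below (fun j => D j = 0) i Hex) as [j [Hj [Dj Hmax]]].
    assert (Hj1 : j < i - 1) by (destruct (Nat.eq_dec j (i - 1)); [subst; lia| lia]).
    assert (Hones : forall k, j < k < i -> D k = 1) by (intros k Hk; specialize (Hmax k Hk); specialize (HD k); lia).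
    destruct (Hyp (j + 1) ltac:(lia)) as [HU _]. replace (j + 1 - 1) with j in HU by lia.
    specialize (HU Dj).
    set (i' := i - (j + 1)).
    assert (Hag : agree (shift (j + 1) D) D i').
    { destruct HU as [k [Hk [Ha Hl]]]. intros x Hx.
      destruct (Nat.lt_ge_cases x k). auto.
      exfalso. unfold shift in Hl. rewrite Hones in Hl by lia. specialize (HD k). lia. }
    assert (H2 : wlt (shift i' (shift (j + 1) D)) (shift i' D) (n - i)).
    { apply shift_wlt. auto. replace (i' + (n - i)) with (n - (j + 1)) by lia. auto. }
    assert (H3 : wle (shift i' D) D (n - i)).
    { apply (wle_mono _ _ (n - i')). left. apply IH; lia. lia. }
    eapply wlt_wle_trans; [|exact H3].
    eapply wlt_ext; [| |exact H2]; intros x Hx; auto. unfold shift. f_equal. lia.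
  -
    assert (Hall : forall k, k < i -> D k = 1) by (intros k Hk; specialize (HD k); destruct (Nat.eq_dec (D k) 0); [exfalso; apply Hnex; eauto| lia]).
    destruct (least_ex (fun r => i <= r /\ D r = 0)) as [r [[Hr Dr] Hrmin]].
    { exists (n - 1). split. lia. auto. }
    assert (Hrn : r < n) by (destruct (Nat.lt_ge_cases r n); auto; exfalso; apply (Hrmin (n-1)); [lia| split; [lia|auto]]).
    assert (Hones : forall k, k < r -> D k = 1).
    { intros k Hk. destruct (Nat.lt_ge_cases k i). auto. specialize (HD k).
      destruct (Nat.eq_dec (D k) 0). exfalso. apply (Hrmin k Hk). split; auto. lia. }
    exists (r - i). split. lia. split.
    + intros x Hx. unfold shift. rewrite !Hones by lia. auto.
    + unfold shift. replace (i + (r - i)) with r by lia. rewrite Dr, Hones by lia. lia.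
Qed.

Lemma DI_L : forall i, 1 <= i < n -> wle (sbar 1 D) (shift i D) (n - i).
Proof.
  intros i Hi.
  assert (HDi := HD (i - 1)).
  destruct (Nat.eq_dec (D (i - 1)) 1) as [e|e]. apply (Hyp i Hi); auto.
  assert (e0 : D (i - 1) = 0) by lia.
  destruct (greatest_below (fun j => D j = 1) i) as [j [Hj [Dj Hmax]]].
  { exists 0. split. lia. auto. }
  assert (Hj1 : j < i - 1) by (destruct (Nat.eq_dec j (i - 1)); [subst; lia| lia]).
  assert (Hzeros : forall k, j < k < i -> D k = 0) by (intros k Hk; specialize (Hmax k Hk); specialize (HD k); lia).
  destruct (Hyp (j + 1) ltac:(lia)) as [_ HL]. replace (j + 1 - 1) with j in HL by lia.
  specialize (HL Dj).
  set (i' := i - (j + 1)).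
  assert (Hag : agree (sbar 1 D) (shift (j + 1) D) i').
  { intros x Hx. destruct HL as [[k [Hk [Ha Hl]]]|Ha].
    - destruct (Nat.lt_ge_cases x k). auto.
      exfalso. unfold shift in Hl. rewrite Hzeros in Hl by lia. lia.
    - apply Ha. lia. }
  assert (H2 : wle (shift i' (sbar 1 D)) (shift i' (shift (j + 1) D)) (n - i)).
  { apply shift_wle. auto. replace (i' + (n - i)) with (n - (j + 1)) by lia. auto. }
  assert (H3 : wle (shift i' D) D (n - i)).
  { apply (wle_mono _ _ (n - i')). left. apply DI_U; lia. lia. }
  apply (wle_bar 1) in H3; [|intros; split; apply HD].
  eapply wle_trans. exact H3.
  eapply wle_ext; [| |exact H2]; intros x Hx; auto. unfold shift. f_equal. lia.
Qed.

End DI.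

Lemma range_lemma X Y Z L : 0 < L -> agree X Y (L - 1) -> Y (L - 1) = S (X (L - 1)) ->
  wle X Z L -> wle Z Y L -> agree Z X L \/ agree Z Y L.
Proof.
  intros HL Hxy Hl H1 H2.
  destruct H1 as [[k [Hk [Ha Hlt]]]|Ha]; [|left; apply agree_sym; auto].
  assert (k = L - 1).
  { destruct (Nat.eq_dec k (L - 1)); auto. exfalso.
    apply (wlt_asym Y Z L). exists k. split; auto. split.
    intros i Hi. rewrite <- Hxy by lia. auto. rewrite <- Hxy by lia. auto. auto. }
  subst k. right.
  destruct H2 as [[k [Hk2 [Hb Hlt2]]]|Hb]; auto.
  destruct (Nat.eq_dec k (L - 1)).
  - subst k. lia.
  - exfalso. assert (k < L - 1) by lia. rewrite <- Ha in Hlt2 by auto. rewrite <- Hxy in Hlt2 by auto. lia.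
Qed.

Section Parse.
Variables (M : nat) (c : list nat).
Hypothesis Hv : cvalid M c.
Let L := length c.
Variable s : seqn.
Hypothesis Hsle : forall i, s i <= M.
Hypothesis HF1 : forall i, seq_le (shift i s) s.
Hypothesis HF2 : forall i, seq_le (sbar M s) (shift i s).
Hypothesis Ht : seq_le s (pre_per (wplus c) (wbar M c)).
Hypothesis H4 : agree s (pad (wplus c)) L.

Definition blockw (j : nat) : list nat := map (fun t => s (L * j + t)) (seq 0 L).

Fixpoint Dp (j : nat) : nat :=
  match j with
  | 0 => 1
  | S j' => if Dp j' =? 1
            then (if list_eq_dec Nat.eq_dec (blockw (S j')) (wbar M c) then 1 else 0)
            else (if list_eq_dec Nat.eq_dec (blockw (S j')) (wplus c) then 1 else 0)
  end.

Lemma Dp_bin : bin Dp.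
Proof. intros [|j]; simpl. lia. destruct (Dp j =? 1), list_eq_dec; lia. Qed.

Lemma blockw_agree j w : length w = L -> (blockw j = w <-> agree (shift (L * j) s) (pad w) L).
Proof.
  intros Hw. split.
  - intros <- t Ht'. unfold pad, blockw, shift. rewrite nth_map_seq; auto.
  - intros H. apply nth_ext with 0 0. unfold blockw. rewrite length_map, length_seq. auto.
    intros t Ht'. unfold blockw in Ht' |- *. rewrite length_map, length_seq in Ht'.
    rewrite nth_map_seq by auto. apply H. auto.
Qed.

Let Pb := per (wbar M c).
Let Pc := per c.

Lemma HL0 : 0 < L.
Proof. apply Hv. Qed.

Lemma Pb_agree : agree Pb (pad (wbar M c)) L.
Proof. intros i Hi. unfold Pb. rewrite per_lt. auto. rewrite wbar_length. auto. Qed.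

Lemma Pc_agree : agree Pc (pad c) L.
Proof. intros i Hi. unfold Pc. rewrite per_lt; auto. Qed.

Lemma Pb_shift : seq_eq (shift L Pb) Pb.
Proof. intro i. pose proof HL0. unfold shift, Pb, L in *. rewrite <- (wbar_length M c) at 1. apply per_period. rewrite wbar_length; auto. Qed.

Lemma Pc_shift : seq_eq (shift L Pc) Pc.
Proof. intro i. pose proof HL0. unfold shift, Pc, L in *. apply per_period. auto. Qed.

Lemma Pb_bar : seq_eq (sbar M Pb) Pc.
Proof.
  intro i. unfold sbar, Pb, Pc, per. rewrite wbar_length. pose proof HL0.
  rewrite wbar_nth by (apply Nat.mod_upper_bound; fold L; lia).
  destruct Hv as [_ [Hc _]]. specialize (Hc (i mod L) ltac:(apply Nat.mod_upper_bound; lia)). fold L. lia.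
Qed.

Lemma Pb_le i : Pb i <= M.
Proof. unfold Pb, per. rewrite wbar_length. pose proof HL0. rewrite wbar_nth by (apply Nat.mod_upper_bound; unfold L in *; lia). lia. Qed.

Lemma HY : seq_le (shift L s) Pb.
Proof.
  pose proof HL0.
  eapply seq_le_ext; [intro; reflexivity| |].
  2:{ apply (seq_le_shift s (pre_per (wplus c) (wbar M c)) L); [|auto].
      intros i Hi. rewrite H4 by auto. unfold pad, pre_per. rewrite wplus_length. fold L.
      destruct (Nat.ltb_spec i L); [auto|lia]. }
  intro i. unfold shift, pre_per, Pb, per. rewrite wplus_length. fold L.
  destruct (Nat.ltb_spec (L + i) L). lia. f_equal. f_equal. lia.
Qed.

Lemma seq_le_wle_n x y n : seq_le x y -> wle x y n.
Proof. intros H. apply seq_le_wle. auto. Qed.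

Lemma sbar_s_agree : agree (sbar M s) (pad (wbar M (wplus c))) L.
Proof.
  intros i Hi. unfold sbar, pad. rewrite wbar_nth by (rewrite wplus_length; auto). rewrite H4 by auto. auto.
Qed.

Lemma wplus_wbar_props :
  agree (pad (wbar M (wplus c))) (pad (wbar M c)) (L - 1) /\
  pad (wbar M c) (L - 1) = S (pad (wbar M (wplus c)) (L - 1)).
Proof.
  pose proof HL0. pose proof (cne M c Hv). destruct Hv as [_ [Hc Hl]]. fold L in Hl, Hc.
  split.
  - intros i Hi. unfold pad. rewrite !wbar_nth by (rewrite ?wplus_length; fold L; lia).
    rewrite wplus_nth by auto. fold L. destruct (Nat.eqb_spec i (L - 1)). lia. auto.
  - unfold pad. rewrite !wbar_nth by (rewrite ?wplus_length; fold L; lia).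
    rewrite wplus_nth by auto. fold L. rewrite Nat.eqb_refl. lia.
Qed.

Lemma wplus_props :
  agree (pad c) (pad (wplus c)) (L - 1) /\ pad (wplus c) (L - 1) = S (pad c (L - 1)).
Proof.
  pose proof HL0. pose proof (cne M c Hv).
  split.
  - intros i Hi. unfold pad. rewrite wplus_nth by auto. fold L. destruct (Nat.eqb_spec i (L - 1)). lia. auto.
  - unfold pad. rewrite wplus_nth by auto. fold L. rewrite Nat.eqb_refl. auto.
Qed.

Definition Inv (j : nat) : Prop :=
  blockw j = blk M c (prevD 0 Dp j) (Dp j) /\
  (Dp j = 1 -> seq_le (shift (L * S j) s) Pb) /\
  (Dp j = 0 -> seq_le Pc (shift (L * S j) s)).

Lemma shift_L_S j : seq_eq (shift L (shift (L * S j) s)) (shift (L * S (S j)) s).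
Proof. intro i. unfold shift. f_equal. lia. Qed.

Lemma Inv_all : forall j, Inv j.
Proof.
  pose proof HL0 as HL.
  induction j.
  - split; [|split].
    + change (blk M c (prevD 0 Dp 0) (Dp 0)) with (wplus c). apply blockw_agree. rewrite wplus_length; auto.
      intros i Hi. unfold shift. rewrite Nat.mul_0_r. apply H4. auto.
    + intros _. eapply seq_le_ext; [|intro; reflexivity|apply HY]. intro i. unfold shift. f_equal. lia.
    + simpl. lia.
  - destruct IHj as [Hb [HA HB]].
    set (Z := shift (L * S j) s).
    assert (HZ1 : seq_le Z s) by apply HF1.
    assert (HZ2 : seq_le (sbar M s) Z) by apply HF2.
    assert (HDj := Dp_bin j).
    destruct (Nat.eq_dec (Dp j) 1) as [e|e].
    + specialize (HA e).
      assert (Hup : wle Z (pad (wbar M c)) L).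
      { eapply wle_ext; [intros i Hi; reflexivity| apply Pb_agree| apply seq_le_wle_n; auto]. }
      assert (Hlo : wle (pad (wbar M (wplus c))) Z L).
      { eapply wle_ext; [apply sbar_s_agree| intros i Hi; reflexivity| apply seq_le_wle_n; auto]. }
      destruct wplus_wbar_props as [Hxy Hl].
      destruct (range_lemma _ _ _ L HL Hxy Hl Hlo Hup) as [HX|HY'].
      *
        assert (Hbw : blockw (S j) = wbar M (wplus c)) by (apply blockw_agree; [rewrite wbar_length, wplus_length; auto| auto]).
        assert (HD : Dp (S j) = 0).
        { simpl. rewrite e. simpl. destruct list_eq_dec as [E|E]; auto.
          exfalso. rewrite Hbw in E. assert (pad (wbar M (wplus c)) (L - 1) = pad (wbar M c) (L - 1)) by (rewrite E; auto). lia. }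
        split; [|split].
        -- rewrite Hbw, HD. simpl prevD. rewrite e. reflexivity.
        -- rewrite HD. discriminate.
        -- intros _. eapply seq_le_ext; [intro; reflexivity|apply shift_L_S|].
           assert (H1 : seq_le (shift L (sbar M s)) (shift L Z)).
           { apply seq_le_shift; auto. eapply agree_trans. apply sbar_s_agree. apply agree_sym. auto. }
           assert (H2 : seq_le (sbar M Pb) (sbar M (shift L s))).
           { apply seq_le_bar. 2: apply HY. intro i. split. apply Hsle. apply Pb_le. }
           eapply seq_le_trans; [|exact H1].
           eapply seq_le_ext; [apply Pb_bar| intro; reflexivity| exact H2].
      *
        assert (Hbw : blockw (S j) = wbar M c) by (apply blockw_agree; [rewrite wbar_length; auto| auto]).
        assert (HD : Dp (S j) = 1).
        { simpl. rewrite e. simpl. destruct list_eq_dec as [E|E]; auto. contradiction. }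
        split; [|split].
        -- rewrite Hbw, HD. simpl prevD. rewrite e. reflexivity.
        -- intros _. eapply seq_le_ext; [apply shift_L_S|apply Pb_shift|].
           apply seq_le_shift; auto. eapply agree_trans. exact HY'. apply agree_sym. apply Pb_agree.
        -- rewrite HD. discriminate.
    + assert (e0 : Dp j = 0) by lia. specialize (HB e0).
      assert (Hlo : wle (pad c) Z L).
      { eapply wle_ext; [apply Pc_agree| intros i Hi; reflexivity| apply seq_le_wle_n; auto]. }
      assert (Hup : wle Z (pad (wplus c)) L).
      { eapply wle_ext; [intros i Hi; reflexivity| exact H4| apply seq_le_wle_n; auto]. }
      destruct wplus_props as [Hxy Hl].
      destruct (range_lemma _ _ _ L HL Hxy Hl Hlo Hup) as [HX|HY'].
      *
        assert (Hbw : blockw (S j) = c) by (apply blockw_agree; auto).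
        assert (HD : Dp (S j) = 0).
        { simpl. rewrite e0. simpl. destruct list_eq_dec as [E|E]; auto.
          exfalso. rewrite Hbw in E. assert (pad c (L - 1) = pad (wplus c) (L - 1)) by (rewrite <- E; auto). lia. }
        split; [|split].
        -- rewrite Hbw, HD. simpl prevD. rewrite e0. reflexivity.
        -- rewrite HD. discriminate.
        -- intros _. eapply seq_le_ext; [apply Pc_shift|apply shift_L_S|].
           apply seq_le_shift; auto. eapply agree_trans. apply Pc_agree. apply agree_sym. auto.
      *
        assert (Hbw : blockw (S j) = wplus c) by (apply blockw_agree; [rewrite wplus_length; auto| auto]).
        assert (HD : Dp (S j) = 1).
        { simpl. rewrite e0. simpl. destruct list_eq_dec as [E|E]; auto. contradiction. }
        split; [|split].
        -- rewrite Hbw, HD. simpl prevD. rewrite e0. reflexivity.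
        -- intros _. eapply seq_le_ext; [apply shift_L_S|intro; reflexivity|].
           eapply seq_le_trans; [|apply HY].
           apply seq_le_shift; auto. eapply agree_trans. exact HY'. apply agree_sym. auto.
        -- rewrite HD. discriminate.
Qed.

Lemma parse : seq_eq s (sigp M c 0 Dp).
Proof.
  intro i. destruct (decomp M c Hv i) as [j [t [Ht' ->]]]. fold L in Ht' |- *.
  rewrite sigp_blk by auto. destruct (Inv_all j) as [Hb _]. rewrite <- Hb.
  unfold blockw. rewrite nth_map_seq; auto.
Qed.

Lemma Dp_0 : Dp 0 = 1.
Proof. reflexivity. Qed.

End Parse.

Lemma fund_u M : 1 <= M -> fundamental M (unit_lift M).
Proof.
  intros HM. destruct (unit_cases M HM) as [[k [Mk [Hk [Hu _]]]]|[k [Mk [Hu _]]]]; rewrite Hu.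
  - split. repeat constructor; lia. right. split. lia. exists k. split; auto. lia.
  - split. repeat constructor; lia. left. split. simpl; lia.
    intros i Hi. simpl in Hi. assert (i = 1) by lia. subst i. simpl. split.
    + right. intros [|[|j]]; unfold pad; simpl; try lia; auto.
    + exists 0. split. intros; lia. unfold pad. simpl. lia.
Qed.

Lemma s_le_M M a : Forall (fun c => c <= M) a -> forall i, per a i <= M.
Proof.
  intros Hf i. unfold per. rewrite Forall_forall in Hf.
  destruct (Nat.lt_ge_cases (i mod length a) (length a)).
  apply Hf. apply nth_In. auto. rewrite nth_overflow by auto. lia.
Qed.

Lemma shift_per_0 a i : 0 < length a -> i mod length a = 0 -> seq_eq (shift i (per a)) (per a).
Proof.
  intros H Hi j. unfold shift. rewrite (Nat.div_mod i (length a)) by lia. rewrite Hi, Nat.add_0_r.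
  apply per_period_k; auto.
Qed.

Lemma seq_le_0 x y : seq_le x y -> x 0 <= y 0.
Proof.
  intros H. destruct (proj1 (seq_le_wle x y) H 1) as [[k [Hk [_ Hl]]]|Ha].
  assert (k = 0) by lia. subst. lia. specialize (Ha 0 ltac:(lia)). lia.
Qed.

Definition alt k j := if Nat.even j then S k else k.

Lemma alt_contra k s n : s 0 = S k -> s 1 = k -> (forall j, k <= s j <= S k) ->
  wlt (shift 2 s) s n -> seq_le (sbar (2 * k + 1) s) (shift 1 s) -> False.
Proof.
  intros H0 H1 Hr [k0 [Hk0 [Ha Hl]]] Hle.
  assert (Hc : forall j, j <= k0 + 1 -> s j = alt k j).
  { intro j. induction j as [j IH] using (well_founded_induction lt_wf). intros Hj.
    destruct j as [|[|j]]. auto. auto.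
    specialize (Ha j ltac:(lia)). unfold shift in Ha. replace (2 + j) with (S (S j)) in Ha by lia.
    rewrite Ha, IH by lia. unfold alt. rewrite !Nat.even_succ, Nat.odd_succ. auto. }
  unfold shift in Hl. rewrite (Hc k0) in Hl by lia. pose proof (Hr (2 + k0)).
  assert (Ek : Nat.even k0 = true) by (unfold alt in Hl; destruct (Nat.even k0); auto; lia).
  apply (seq_lt_asym (shift 1 s) (sbar (2 * k + 1) s)); auto.
  apply seq_lt_wlt. exists (k0 + 2). exists (k0 + 1). split. lia. split.
  - intros j Hj. unfold shift, sbar. rewrite !Hc by lia. unfold alt. replace (1 + j) with (S j) by lia.
    rewrite Nat.even_succ, <- Nat.negb_even. destruct (Nat.even j); simpl; lia.
  - unfold shift, sbar. rewrite (Hc (k0 + 1)) by lia. unfold alt.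
    replace (k0 + 1) with (S k0) by lia. rewrite Nat.even_succ, <- Nat.negb_even, Ek. simpl.
    assert (s (1 + S k0) = k) by (unfold alt in Hl; rewrite Ek in Hl; replace (1 + S k0) with (2 + k0) by lia; lia).
    replace (S (S k0)) with (1 + S k0) by lia. lia.
Qed.

Theorem CL M a : 1 <= M -> fundamental M a -> irreducible M a -> a <> unit_lift M ->
  seq_lt (pre_per (wplus (unit_lift M)) (wbar M (unit_lift M))) (per a).
Proof.
  intros HM [Hf Hfa] Hirr Hne.
  pose proof (cvalid_unit M HM) as Hv.
  set (u := unit_lift M) in *. set (L := length u).
  set (t := pre_per (wplus u) (wbar M u)). set (s := per a).
  apply NNPP. intro Hn. apply seq_le_not_lt in Hn.
  destruct Hfa as [[Hm HW0]|[HM2 [a1 [-> Ha1]]]].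
  2:{
    apply (seq_lt_asym t s); [|exact Hn].
    destruct (unit_cases M HM) as [[k [Mk [Hk [Hu _]]]]|[k [Mk [Hu _]]]]; unfold t, s, u in *; rewrite Hu in *.
    - assert (a1 <> k) by (intro; subst; apply Hne; auto).
      destruct (Nat.eq_dec a1 (S k)).
      + subst a1. exists 1. split. intros [|i] Hi; [|lia]. reflexivity.
        unfold pre_per, per. simpl. lia.
      + exists 0. split. intros; lia. unfold pre_per, per. simpl. lia.
    - destruct (Nat.eq_dec a1 (S k)).
      + subst a1. exists 2. split. intros [|[|i]] Hi; [reflexivity|reflexivity|lia].
        unfold pre_per, per. simpl. lia.
      + exists 0. split. intros; lia. unfold pre_per, per. simpl. lia. }
  set (m := length a) in *.
  pose proof (fund_windows M a Hm HW0) as HW. fold m s in HW.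
  pose proof (fund_seq M a Hm Hf HW) as HS. fold m s in HS.
  assert (Hsle : forall i, s i <= M) by (apply s_le_M; auto).
  assert (Hs0 : M < 2 * s 0).
  { destruct (HW (m - 1) ltac:(lia)) as [H1 H2]. replace (m - (m - 1)) with 1 in H1, H2 by lia.
    destruct H1 as [k [Hk [_ Hl]]]. assert (k = 0) by lia. subst k. unfold shift in Hl.
    destruct H2 as [[k [Hk2 [_ Hl2]]]|H2]. assert (k = 0) by lia. subst k. unfold shift, sbar in Hl2. lia.
    specialize (H2 0 ltac:(lia)). unfold shift, sbar in H2. lia. }
  assert (HF1 : forall i, seq_le (shift i s) s).
  { intro i. destruct (Nat.eq_dec (i mod m) 0). right. apply shift_per_0; auto; lia. left. apply HS; auto. }
  assert (HF2 : forall i, seq_le (sbar M s) (shift i s)).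
  { intro i. destruct (Nat.eq_dec (i mod m) 0).
    - eapply seq_le_ext; [intro; reflexivity| intro j; symmetry; apply shift_per_0; auto; lia|].
      left. exists 0. split. intros; lia. unfold sbar. change (per a) with s. lia.
    - apply HS; auto. }
  assert (Hrange : forall j, M - s 0 <= s j <= s 0).
  { intro j. split.
    - pose proof (seq_le_0 _ _ (HF2 j)). unfold sbar, shift in H. rewrite Nat.add_0_r in H. auto.
    - pose proof (seq_le_0 _ _ (HF1 j)). unfold shift in H. rewrite Nat.add_0_r in H. auto. }
  assert (Hs0t : s 0 <= t 0) by (apply seq_le_0; auto).
  assert (Hper0 : forall j, s (m + j) = s j) by (intro j; unfold s, m; apply per_period; lia).
  assert (Hsa : forall j, j < m -> s j = nth j a 0) by (intros j Hj; unfold s; apply per_lt; auto).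
  assert (H4 : agree s (pad (wplus u)) L).
  { destruct (unit_cases M HM) as [[k [Mk [Hk [Hu _]]]]|[k [Mk [Hu _]]]]; unfold L, t, u in *; rewrite Hu in *.
    - assert (s 0 = S k). { unfold pre_per in Hs0t. simpl in Hs0t. lia. }
      intros i Hi. simpl in Hi. assert (i = 0) by lia. subst i. rewrite H. reflexivity.
    - assert (E0 : s 0 = S k). { unfold pre_per in Hs0t. simpl in Hs0t. lia. }
      assert (E1 : s 1 = S k).
      { pose proof (Hrange 1). destruct (Nat.eq_dec (s 1) (S k)); auto. exfalso.
        destruct (Nat.eq_dec m 2) as [e2|e2].
        - apply Hne. apply nth_ext with 0 0. unfold m in e2. rewrite e2. auto.
          intros i Hi. unfold m in e2. rewrite e2 in Hi. rewrite <- Hsa by lia.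
          destruct i as [|[|]]; simpl; lia.
        - destruct (HW 2 ltac:(lia)) as [Hw2 _].
          apply (alt_contra k s (m - 2)); auto; try lia.
          intro j. pose proof (Hrange j). lia.
          rewrite <- Mk. apply HF2. }
      intros i Hi. simpl in Hi. destruct i as [|[|]]; try lia; simpl; auto. }
  pose proof (parse M u Hv s Hsle HF1 HF2 Hn H4) as HP.
  set (D := Dp M u s) in HP. pose proof (Dp_bin M u s) as HDb. fold D in HDb.
  assert (HD0 : D 0 = 1) by reflexivity.
  pose proof (Lpos M u Hv) as HL. fold L in HL.
  assert (Hmul : exists m', m = L * m').
  { destruct (unit_cases M HM) as [[k [Mk [Hk [Hu _]]]]|[k [Mk [Hu _]]]].
    - exists m. unfold L, u. rewrite Hu. simpl. lia.
    - destruct (Nat.Even_or_Odd m) as [[r Hr]|[r Hr]].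
      + exists r. unfold L, u. rewrite Hu. simpl. lia.
      + exfalso.
        assert (Hsum : forall j, s (2 * j + 1) + s (2 * S j + 0) = M).
        { intro j. assert (HL2 : L = 2) by (unfold L, u; rewrite Hu; auto).
          rewrite !HP. 
          assert (E1 : sigp M u 0 D (2 * j + 1) = nth 1 (blk M u (prevD 0 D j) (D j)) 0)
            by (rewrite <- HL2; apply sigp_blk; auto; lia).
          assert (E2 : sigp M u 0 D (2 * S j + 0) = nth 0 (blk M u (prevD 0 D (S j)) (D (S j))) 0)
            by (rewrite <- HL2; apply sigp_blk; auto; lia).
          rewrite E1, E2. pose proof (cne M u Hv).
          assert (Hpj : prevD 0 D j <= 1) by (destruct j; simpl; auto; lia).
          rewrite !blk_nth by (auto; try lia; simpl; auto).
          unfold u in *. rewrite Hu. simpl length. simpl nth. simpl prevD.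
          pose proof (HDb j). pose proof (HDb (S j)).
          change (bit (1 =? 2 - 1)) with 1. change (bit (0 =? 2 - 1)) with 0.
          remember (prevD 0 D j) as P. remember (D j) as X.
          assert (P = 0 \/ P = 1) as [-> | ->] by lia; assert (X = 0 \/ X = 1) as [-> | ->] by lia; simpl; lia. }
        assert (E0 : s 0 = S k /\ s 1 = S k).
        { assert (HL2 : L = 2) by (unfold L, u; rewrite Hu; auto).
          split; [rewrite (H4 0) by lia | rewrite (H4 1) by lia]; unfold pad, u; rewrite Hu; reflexivity. }
        specialize (Hsum r). rewrite <- Hr in Hsum.
        replace (2 * S r + 0) with (m + 1) in Hsum by lia.
        rewrite Hper0 in Hsum. replace m with (m + 0) in Hsum at 1 by lia. rewrite Hper0 in Hsum.
        destruct E0 as [E0 E1]. rewrite E0 in Hsum. rewrite E1 in Hsum. lia. }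
  destruct Hmul as [m' Hm'].
  assert (Hm'1 : 1 <= m') by nia.
  assert (HDl : D (m' - 1) = 0).
  { pose proof (HDb (m' - 1)). destruct (Nat.eq_dec (D (m' - 1)) 0); auto. exfalso.
    assert (E : s (L * m' + 0) = s 0) by (rewrite <- Hm'; rewrite Hper0; auto).
    rewrite HP, sigp_blk in E by auto.
    replace (prevD 0 D m') with (D (m' - 1)) in E by (destruct m'; [lia|simpl; f_equal; lia]).
    rewrite (H4 0) in E by lia.
    pose proof (cne M u Hv). pose proof (HDb m').
    rewrite blk_nth in E by (auto; lia).
    destruct (Nat.eqb_spec (D (m' - 1)) 0); [lia|].
    unfold pad in E. rewrite wplus_nth in E by auto.
    destruct (unit_cases M HM) as [[k [Mk [Hk [Hu _]]]]|[k [Mk [Hu _]]]];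
    unfold L, u in *; rewrite Hu in *; simpl in E; lia. }
  set (d := map D (seq 0 m')).
  assert (Hdn : forall j, j < m' -> nth j d 0 = D j) by (intros; unfold d; apply nth_map_seq; auto).
  assert (Hdl : length d = m') by (unfold d; rewrite length_map, length_seq; auto).
  assert (Hdf : Forall (fun x => x <= 1) d) by (apply Forall_le1; intros i Hi; rewrite Hdn by lia; apply HDb).
  assert (Hbd : binw d).
  { split; [auto|split]. rewrite Hdn by lia. auto. rewrite Hdl, Hdn by lia. auto. }
  assert (Hcomp : compose M u d = Some a).
  { destruct (compose_spec M u d Hdf (binw_head d Hbd)) as [a' [E [La Na]]].
    rewrite E. f_equal. apply nth_ext with 0 0. rewrite La, Hdl. fold L. lia.
    intros i Hi. rewrite La, Hdl in Hi. fold L in Hi.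
    destruct (decomp M u Hv i) as [J [t0 [Ht0 ->]]]. fold L in Ht0 |- *.
    assert (J < m') by nia.
    rewrite Na by (auto; lia). rewrite <- Hsa by lia. rewrite HP, sigp_blk by auto.
    rewrite Hdn by auto. f_equal. f_equal. destruct J; simpl; auto. apply Hdn. lia. }
  assert (Hctx : forall i, 1 <= i < m' ->
     (D (i - 1) = 0 -> wlt (shift i D) D (m' - i)) /\ (D (i - 1) = 1 -> wle (sbar 1 D) (shift i D) (m' - i))).
  { intros i Hi. destruct (HW (L * i) ltac:(nia)) as [W1 W2].
    replace (m - L * i) with (L * (m' - i)) in W1, W2 by nia.
    assert (Hsh : seq_eq (shift (L * i) s) (sigp M u (D (i - 1)) (shift i D))).
    { intro j. unfold shift at 1. rewrite HP, sigp_shift by auto. destruct i. lia. simpl. f_equal. f_equal. lia. }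
    assert (Hbar : seq_eq (sbar M s) (sigp M u 1 (sbar 1 D))).
    { intro j. unfold sbar at 1. rewrite HP. symmetry. apply (sigp_bar M u Hv 0 D HDb). lia. }
    assert (Hsb : bin (shift i D)) by (intro j; apply HDb).
    assert (Hbb : bin (sbar 1 D)) by (intro j; unfold sbar; lia).
    split; intros e; rewrite e in Hsh.
    - apply (sigp_wlt_rev M u Hv 0); auto.
      eapply wlt_ext; [intros j _; apply Hsh| intros j _; apply HP| exact W1].
    - apply (sigp_wle_rev M u Hv 1); auto.
      eapply wle_ext; [intros j _; apply Hbar| intros j _; apply Hsh| exact W2]. }
  assert (HU := DI_U D m' HDb HD0 HDl Hm'1 Hctx).
  assert (HLo := DI_L D m' HDb HD0 HDl Hm'1 Hctx).
  assert (Hfd : fundamental 1 d).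
  { split. apply Forall_impl with (2 := Hdf). auto.
    left. split. apply binw_len; auto.
    intros i Hi. rewrite Hdl in Hi |- *. split.
    - apply (wle_word_le _ _ (m' - i) (sbar 1 D) (shift i D)).
      + rewrite wbar_length, length_firstn. lia.
      + rewrite length_skipn. lia.
      + intros j Hj. unfold pad, sbar. rewrite wbar_nth by (rewrite length_firstn; lia).
        rewrite nth_firstn. destruct (Nat.ltb_spec j (m' - i)); [|lia]. rewrite Hdn by lia. auto.
      + intros j Hj. unfold pad, shift. rewrite nth_skipn, Hdn by lia. auto.
      + apply HLo. lia.
    - apply (wlt_word_lt _ _ (m' - i) (shift i D) D).
      + intros j Hj. unfold pad, shift. rewrite nth_skipn, Hdn by lia. auto.
      + intros j Hj. unfold pad. rewrite nth_firstn. destruct (Nat.ltb_spec j (m' - i)); [|lia]. rewrite Hdn by lia. auto.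
      + apply HU. lia. }
  apply Hirr. exists u, d. split; [apply fund_u; auto|split; auto].
Qed.


Lemma fund1_binw b : fundamental 1 b -> binw b.
Proof.
  intros [Hf [[Hm HW]|[H _]]]; [|lia].
  destruct (HW (length b - 1) ltac:(lia)) as [_ H2].
  apply (word_lt_wlt _ _ 1) in H2; [| rewrite length_skipn; lia| rewrite length_firstn; lia].
  destruct H2 as [k [Hk [_ Hl]]]. assert (k = 0)%nat by lia. subst k.
  unfold pad in Hl. rewrite nth_skipn, nth_firstn in Hl. simpl in Hl.
  replace (length b - 1 + 0)%nat with (length b - 1)%nat in Hl by lia.
  assert (Hf1 : Forall (fun x => x <= 1)%nat b) by auto.
  pose proof (Forall_nth_le b Hf1 0). pose proof (Forall_nth_le b Hf1 (length b - 1)).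
  replace (length b - (length b - 1)) with 1 in Hl by lia. simpl in Hl. split; auto. split; lia.
Qed.

Lemma bin_le_TT X : bin X -> seq_le X TT.
Proof.
  intros H. apply seq_le_not_lt. intros [k [_ Hk]]. unfold TT in Hk. specialize (H k). lia.
Qed.

Lemma binw_pre_bin d : binw d -> bin (pre_per (wplus d) (wbar 1 d)).
Proof.
  intros Hd j. pose proof (binw_ne d Hd) as Hne. destruct Hd as [Hf [H0 Hl]].
  unfold pre_per. rewrite wplus_length. destruct (Nat.ltb_spec j (length d)).
  - rewrite wplus_nth by auto. destruct (Nat.eqb_spec j (length d - 1)). subst. rewrite Hl. lia.
    apply Forall_nth_le; auto.
  - rewrite wbar_length. rewrite wbar_nth. lia. apply Nat.mod_upper_bound. destruct d; simpl; [congruence|lia].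
Qed.

Lemma iterS_lt k X Y : bin X -> bin Y -> seq_lt X Y -> seq_lt (iterS k X) (iterS k Y).
Proof.
  intros HX HY H. induction k. auto. rewrite !iterS_S. apply sigp_seq_lt; auto using cvalid10, iterS_bin.
Qed.

Lemma iterS_le k X Y : bin X -> bin Y -> seq_le X Y -> seq_le (iterS k X) (iterS k Y).
Proof.
  intros HX HY H. induction k. auto. rewrite !iterS_S. apply sigp_seq_le; auto using cvalid10, iterS_bin.
Qed.

Lemma TT_bin : bin TT.
Proof. intro; unfold TT; lia. Qed.

Lemma iterS_shift k : seq_eq (iterS k (S10 TT)) (iterS (S k) TT).
Proof.
  induction k. intro; reflexivity.
  rewrite iterS_S. intro i. rewrite iterS_S. unfold S10 at 1. rewrite (sigp_ext 1 [1;0] cvalid10 0 _ _ IHk). auto.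
Qed.

Lemma S10_TT : seq_eq (pre_per (wplus [1;0]) (wbar 1 [1;0])) (S10 TT).
Proof. intro i. symmetry. apply (I3 1 [1;0] cvalid10). Qed.

Open Scope R_scope.

Theorem proposition3p2 (M : nat) (HM : (1 <= M)%nat)
  (qG : R) (HqG : is_qL M (unit_lift M) qG)
  (qp : nat -> R) (Hqp : forall n, (1 <= n)%nat -> is_qprime M n (qp n)) :
  (forall a x y, fundamental M a -> irreducible M a ->
     is_qL M a x -> is_qR M a y ->
     ~ (x = qG /\ y = qp 1%nat) ->
     qp 1%nat < x /\ y <= INR M + 1)
  /\
  (forall n a x y, (1 <= n)%nat -> fundamental M a -> n_irreducible M n a ->
     is_qL M a x -> is_qR M a y ->
     y <> qp (S n) ->
     qp (S n) < x /\ y <= qp n).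
Proof.
  pose proof (cvalid_unit M HM) as Hv.
  set (u := unit_lift M) in *.
  assert (HQ : forall j, seq_eq (sigp M u 0 (iterS j TT))
                 (pre_per (lam_word M (S j)) (wplus (wbar M (lam_word M (S j)))))) by (intro j; apply Ilam; auto).
  assert (HT : seq_eq (pre_per (wplus u) (wbar M u)) (pre_per (lam_word M 1) (wplus (wbar M (lam_word M 1))))).
  { intro i. rewrite <- (I3 M u Hv). apply (HQ 0%nat). }
  split.
  - intros a x y Hfa Hirr Hx Hy Hnot. split.
    + destruct (list_eq_dec Nat.eq_dec a u) as [e|e].
      * exfalso. apply Hnot. subst a. split.
        -- apply (alpha_eq M x qG (per u) (per u)); [auto|auto|intro; auto].
        -- apply (alpha_eq M y (qp 1%nat) _ _ Hy (Hqp 1%nat ltac:(lia))). apply HT.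
      * pose proof (CL M a HM Hfa Hirr e) as H.
        apply (alpha_lt M (qp 1%nat) x _ _ (Hqp 1%nat ltac:(lia)) Hx).
        eapply seq_lt_ext; [exact HT| intro; reflexivity| exact H].
    + destruct Hy as [[_ H] _]. exact H.
  - intros n a x y Hn Hfa [b [w [Hb [Hbirr [Hw Hc]]]]] Hx Hy Hne.
    pose proof (fund1_binw b Hb) as Hbb.
    destruct (iter_w (n - 1) b Hbb w Hw) as [Hwb [Hpw Hppw]].
    pose proof (I1 M u Hv w a Hwb Hc) as Ha1.
    pose proof (I2 M u Hv w a Hwb Hc) as Ha2.
    assert (Hbin_b : bin (per b)) by (apply per_bin; apply Hbb).
    assert (Hbin_pb : bin (pre_per (wplus b) (wbar 1 b))) by (apply binw_pre_bin; auto).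
    assert (Hxs : seq_eq (per a) (sigp M u 0 (iterS (n - 1) (per b)))).
    { intro i. rewrite Ha1. apply sigp_ext; auto. }
    assert (Hys : seq_eq (pre_per (wplus a) (wbar M a)) (sigp M u 0 (iterS (n - 1) (pre_per (wplus b) (wbar 1 b))))).
    { intro i. rewrite Ha2. apply sigp_ext; auto. }
    assert (HQn : seq_eq (sigp M u 0 (iterS (n - 1) (S10 TT))) (pre_per (lam_word M (S n)) (wplus (wbar M (lam_word M (S n)))))).
    { intro i. rewrite (sigp_ext M u Hv 0 _ _ (iterS_shift (n - 1))). replace (S (n - 1)) with n by lia. apply HQ. }
    assert (HQn1 : seq_eq (sigp M u 0 (iterS (n - 1) TT)) (pre_per (lam_word M n) (wplus (wbar M (lam_word M n))))).
    { intro i. replace n with (S (n - 1)) at 2 3 by lia. apply HQ. }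
    split.
    + destruct (list_eq_dec Nat.eq_dec b [1%nat;0%nat]) as [e|e].
      * exfalso. apply Hne. apply (alpha_eq M y (qp (S n)) _ _ Hy (Hqp (S n) ltac:(lia))).
        intro i. rewrite Hys. rewrite <- HQn. apply sigp_ext; auto. apply iterS_ext. subst b. apply S10_TT.
      * assert (Hu1 : unit_lift 1 = [1%nat;0%nat]) by reflexivity.
        pose proof (CL 1 b ltac:(lia) Hb Hbirr ltac:(rewrite Hu1; auto)) as H. rewrite Hu1 in H.
        apply (seq_lt_ext _ _ (S10 TT) (per b)) in H; [|apply S10_TT| intro; reflexivity].
        apply (iterS_lt (n - 1)) in H; [| apply S10_bin, TT_bin| auto].
        apply (sigp_seq_lt M u Hv 0) in H; [| lia| apply iterS_bin, S10_bin, TT_bin| apply iterS_bin; auto].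
        apply (alpha_lt M (qp (S n)) x _ _ (Hqp (S n) ltac:(lia)) Hx).
        eapply seq_lt_ext; [exact HQn| intro i; symmetry; apply Hxs| exact H].
    + assert (H : seq_le (pre_per (wplus b) (wbar 1 b)) TT) by (apply bin_le_TT; auto).
      apply (iterS_le (n - 1)) in H; [| auto| apply TT_bin].
      apply (sigp_seq_le M u Hv 0) in H; [| lia| apply iterS_bin; auto| apply iterS_bin, TT_bin].
      apply (seq_le_ext _ _ (pre_per (wplus a) (wbar M a)) (pre_per (lam_word M n) (wplus (wbar M (lam_word M n))))) in H;
        [| intro i; symmetry; apply Hys| exact HQn1].
      destruct H as [H|H].
      * left. apply (alpha_lt M y (qp n) _ _ Hy (Hqp n Hn) H).
      * right. apply (alpha_eq M y (qp n) _ _ Hy (Hqp n Hn) H).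
Qed.
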